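(* There is an absolute constant $C>0$ such that, setting $C_q=C(1-q)^{-4}$, for all $c\ge0$ and $n\ge0$ with $q:=c^2/\chi_n(c)<1$, $$\sup_{|x|\le1}|\psi_{n,c}(x)|\le C_q\,\chi_n(c)^{1/4},\qquad \sup_{|x|\le1}(1-x^2)^{1/4}|\psi_{n,c}(x)|\le C_q .$$
   Context: Fix a bandwidth $c\ge 0$. The prolate spheroidal wave functions (PSWFs) $\psi_{n,c}$, $n\ge0$, are the solutions on $[-1,1]$, bounded as $|x|\to1^-$, of $\frac{d}{dx}\big[(1-x^2)\psi'(x)\big]+(\chi_n(c)-c^2x^2)\psi(x)=0$, where $0\le\chi_0(c)<\chi_1(c)<\cdots$ are the eigenvalues; $n(n+1)\le\chi_n(c)\le n(n+1)+c^2$. They are normalized by $\int_{-1}^1|\psi_{n,c}|^2dx=1$, $\psi_{n,c}$ has the parity of $n$, and $\psi_{n,c}(1)\ge0$. *)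

(* Defs.v *)
From Stdlib Require Import Reals Lra List.
Open Scope R_scope.

Definition solves_pswf_ode (c chi : R) (psi : R -> R) : Prop :=
  exists dpsi d2psi : R -> R,
    forall x, -1 < x < 1 ->
      derivable_pt_lim psi x (dpsi x) /\
      derivable_pt_lim dpsi x (d2psi x) /\
      (1 - x^2) * d2psi x - 2 * x * dpsi x + (chi - c^2 * x^2) * psi x = 0.

Definition is_eigenvalue (c chi : R) : Prop :=
  exists psi : R -> R,
    solves_pswf_ode c chi psi /\
    (exists M, forall x, -1 < x < 1 -> Rabs (psi x) <= M) /\
    (exists x, -1 < x < 1 /\ psi x <> 0).

(* chi = chi_n(c): an eigenvalue with exactly n eigenvalues strictly below it. *)
Definition is_chi (c : R) (n : nat) (chi : R) : Prop :=
  is_eigenvalue c chi /\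
  exists l : list R, length l = n /\ NoDup l /\
    (forall y, In y l <-> (is_eigenvalue c y /\ y < chi)).

Definition is_pswf (c : R) (n : nat) (chi : R) (psi : R -> R) : Prop :=
  solves_pswf_ode c chi psi /\
  (forall x, -1 <= x <= 1 -> continuity_pt psi x) /\
  (exists pr : Riemann_integrable (fun x => psi x ^ 2) (-1) 1, RiemannInt pr = 1) /\
  (forall x, -1 <= x <= 1 -> psi (- x) = (-1) ^ n * psi x) /\
  0 <= psi 1.

(* Main.v *)
Require Import Defs.
From Stdlib Require Import Reals Lra List Psatz.
Open Scope R_scope.

Lemma D_eq f x l l' : derivable_pt_lim f x l -> l = l' -> derivable_pt_lim f x l'.
Proof. intros H ->; exact H. Qed.
Lemma D_const k x : derivable_pt_lim (fun _ => k) x 0.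
Proof. apply (derivable_pt_lim_const k x). Qed.
Lemma D_id x : derivable_pt_lim (fun t => t) x 1.
Proof. apply (derivable_pt_lim_id x). Qed.
Lemma D_plus f g x a b : derivable_pt_lim f x a -> derivable_pt_lim g x b ->
  derivable_pt_lim (fun t => f t + g t) x (a + b).
Proof. intros; apply (derivable_pt_lim_plus f g); auto. Qed.
Lemma D_minus f g x a b : derivable_pt_lim f x a -> derivable_pt_lim g x b ->
  derivable_pt_lim (fun t => f t - g t) x (a - b).
Proof. intros; apply (derivable_pt_lim_minus f g); auto. Qed.
Lemma D_mult f g x a b : derivable_pt_lim f x a -> derivable_pt_lim g x b ->
  derivable_pt_lim (fun t => f t * g t) x (a * g x + f x * b).
Proof. intros; apply (derivable_pt_lim_mult f g); auto. Qed.
Lemma D_div f g x a b : derivable_pt_lim f x a -> derivable_pt_lim g x b -> g x <> 0 ->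
  derivable_pt_lim (fun t => f t / g t) x ((a * g x - b * f x) / (g x * g x)).
Proof. intros; apply (derivable_pt_lim_div f g); auto. Qed.
Lemma D_comp f g x a b : derivable_pt_lim f x a -> derivable_pt_lim g (f x) b ->
  derivable_pt_lim (fun t => g (f t)) x (b * a).
Proof. intros; apply (derivable_pt_lim_comp f g); auto. Qed.
Lemma D_sqrt f x a : derivable_pt_lim f x a -> 0 < f x ->
  derivable_pt_lim (fun t => sqrt (f t)) x (a / (2 * sqrt (f x))).
Proof. intros. eapply D_eq. apply (D_comp f sqrt); eauto. apply derivable_pt_lim_sqrt; auto.
  field. apply Rgt_not_eq. apply sqrt_lt_R0; auto. Qed.
Lemma D_ln f x a : derivable_pt_lim f x a -> 0 < f x ->
  derivable_pt_lim (fun t => ln (f t)) x (a / f x).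
Proof. intros. eapply D_eq. apply (D_comp f ln); eauto. apply derivable_pt_lim_ln; auto.
  field. lra. Qed.
Lemma D_sq f x a : derivable_pt_lim f x a ->
  derivable_pt_lim (fun t => f t ^ 2) x (2 * f x * a).
Proof. intros. eapply D_eq. eapply derivable_pt_lim_ext. 2: apply (D_mult f f); eauto.
  intros; simpl; ring. simpl; ring. Qed.

Lemma mono_up f f' a b : a <= b ->
  (forall t, a <= t <= b -> derivable_pt_lim f t (f' t)) ->
  (forall t, a <= t <= b -> 0 <= f' t) -> f a <= f b.
Proof.
  intros Hab Hd Hp. destruct (Req_dec a b) as [->|Hne]; [lra|].
  destruct (MVT_cor2 f f' a b) as [c [Hc Hc2]]; [lra| exact Hd |].
  assert (0 <= f' c) by (apply Hp; lra). nra.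
Qed.

Lemma mono_down f f' a b : a <= b ->
  (forall t, a <= t <= b -> derivable_pt_lim f t (f' t)) ->
  (forall t, a <= t <= b -> f' t <= 0) -> f b <= f a.
Proof.
  intros Hab Hd Hp.
  assert (- f a <= - f b); [|lra].
  apply (mono_up (fun t => - f t) (fun t => - f' t)); auto.
  - intros t Ht. apply (derivable_pt_lim_opp f). auto.
  - intros t Ht. specialize (Hp t Ht). lra.
Qed.

Lemma lip f f' a b B : a <= b ->
  (forall t, a < t < b -> derivable_pt_lim f t (f' t)) ->
  (forall t, a < t < b -> Rabs (f' t) <= B) ->
  (forall t, a <= t <= b -> continuity_pt f t) ->
  Rabs (f b - f a) <= B * (b - a).
Proof.
  intros Hab Hd Hb Hc. destruct (Req_dec a b) as [->|Hne].
  { replace (f b - f b) with 0 by ring. rewrite Rabs_R0. lra. }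
  assert (pr1 : forall c, a < c < b -> derivable_pt f c).
  { intros c Hc'. exists (f' c). apply Hd; exact Hc'. }
  assert (pr2 : forall c, a < c < b -> derivable_pt id c).
  { intros c _. exists 1. apply (derivable_pt_lim_id c). }
  destruct (MVT f id a b pr1 pr2) as [c [P HP]]; [lra|auto| intros; apply derivable_continuous_pt; apply derivable_pt_id|].
  rewrite (derive_pt_eq_0 f c (f' c) (pr1 c P) (Hd c P)) in HP.
  rewrite (derive_pt_eq_0 id c 1 (pr2 c P) (derivable_pt_lim_id c)) in HP.
  unfold id in HP. replace (f b - f a) with ((b - a) * f' c) by lra.
  rewrite Rabs_mult, Rabs_right by lra. specialize (Hb c P). nra.
Qed.

Lemma Rabs_le_inv a b : Rabs a <= b -> -b <= a <= b.
Proof. unfold Rabs. destruct (Rcase_abs a); lra. Qed.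
Lemma prod_nonpos a b : 0 <= a -> b <= 0 -> a * b <= 0.
Proof. intros. nra. Qed.
Lemma prod_le_l a b c : 0 <= a -> b <= c -> a * b <= a * c.
Proof. intros. apply Rmult_le_compat_l; auto. Qed.
Lemma Rdiv_le_0_compat a b : 0 <= a -> 0 < b -> 0 <= a / b.
Proof. intros. unfold Rdiv. apply Rmult_le_pos; auto. left; apply Rinv_0_lt_compat; auto. Qed.
Lemma pow_le1 x n : 0 <= x <= 1 -> x ^ n <= 1.
Proof. intros. rewrite <- (pow1 n). apply pow_incr. lra. Qed.
Lemma prod_nonpos_r a b : a <= 0 -> 0 <= b -> a * b <= 0.
Proof. intros. nra. Qed.

Definition ODEH (c2 chi : R) (psi dpsi d2psi : R -> R) : Prop :=
  forall x, -1 < x < 1 ->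
    derivable_pt_lim psi x (dpsi x) /\ derivable_pt_lim dpsi x (d2psi x) /\
    (1 - x^2) * d2psi x - 2 * x * dpsi x + (chi - c2 * x^2) * psi x = 0.

Definition pp (t : R) := 1 - t^2.
Definition rr (c2 chi t : R) := chi - c2 * t^2.
Definition ss (c2 chi t : R) := pp t * rr c2 chi t.
Definition sd (c2 chi t : R) := -2 * t * rr c2 chi t - 2 * c2 * t * pp t.
Definition sdd (c2 chi t : R) := -2 * rr c2 chi t - 2 * c2 * pp t + 8 * c2 * t^2.
Definition uu (dpsi : R -> R) (t : R) := pp t * dpsi t.
Definition Qf c2 chi (psi dpsi : R -> R) t := psi t ^ 2 + uu dpsi t ^ 2 / ss c2 chi t.
Definition Zf c2 chi (psi dpsi : R -> R) t := ss c2 chi t * Qf c2 chi psi dpsi t ^ 2.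
Definition hf c2 chi t := sd c2 chi t / rr c2 chi t.
Definition hdf c2 chi t := (sdd c2 chi t * rr c2 chi t - sd c2 chi t * (-2 * c2 * t)) / (rr c2 chi t ^ 2).
Definition Yf c2 chi (psi dpsi : R -> R) t :=
  Zf c2 chi psi dpsi t + hf c2 chi t * Qf c2 chi psi dpsi t * (psi t * uu dpsi t).
Definition Ef c2 chi (psi dpsi : R -> R) t := ss c2 chi t * psi t ^ 2 + uu dpsi t ^ 2.

Lemma Dpp t : derivable_pt_lim pp t (-2 * t).
Proof. unfold pp. eapply D_eq. apply D_minus. apply D_const. apply D_sq. apply D_id. cbv beta; ring. Qed.
Lemma Drr c2 chi t : derivable_pt_lim (rr c2 chi) t (-2 * c2 * t).
Proof. unfold rr. eapply D_eq. apply D_minus. apply D_const. apply D_mult. apply D_const.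
  apply D_sq. apply D_id. cbv beta; ring. Qed.
Lemma Dss c2 chi t : derivable_pt_lim (ss c2 chi) t (sd c2 chi t).
Proof. unfold ss. eapply D_eq. apply D_mult. apply Dpp. apply Drr. cbv beta; unfold sd; ring. Qed.
Lemma Dsd c2 chi t : derivable_pt_lim (sd c2 chi) t (sdd c2 chi t).
Proof. unfold sd. eapply D_eq. apply D_minus. apply D_mult. apply D_mult. apply D_const. apply D_id.
  apply Drr. apply D_mult. apply D_mult. apply D_const. apply D_id. apply Dpp.
  cbv beta; unfold sdd, rr, pp; ring. Qed.
Lemma Du c2 chi psi dpsi d2psi t : ODEH c2 chi psi dpsi d2psi -> -1 < t < 1 ->
  derivable_pt_lim (uu dpsi) t (- rr c2 chi t * psi t).
Proof. intros H Ht. destruct (H t Ht) as [H1 [H2 H3]]. unfold uu. eapply D_eq.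
  apply D_mult. apply Dpp. exact H2. unfold pp, rr in *. lra. Qed.
Lemma Dpsi c2 chi psi dpsi d2psi t : ODEH c2 chi psi dpsi d2psi -> -1 < t < 1 ->
  derivable_pt_lim psi t (dpsi t).
Proof. intros H Ht. apply (H t Ht). Qed.

Lemma pp_pos t : -1 < t < 1 -> 0 < pp t.
Proof. intros. unfold pp. nra. Qed.

Lemma rr_pos c2 chi t : 0 <= c2 < chi -> -1 <= t <= 1 -> 0 < rr c2 chi t.
Proof. intros. unfold rr. assert (t^2 <= 1) by nra. nra. Qed.

Lemma DQ c2 chi psi dpsi d2psi t : ODEH c2 chi psi dpsi d2psi -> -1 < t < 1 -> 0 <= c2 < chi ->
  derivable_pt_lim (Qf c2 chi psi dpsi) t (- sd c2 chi t * uu dpsi t ^ 2 / ss c2 chi t ^ 2).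
Proof. intros H Ht Hc. pose proof (pp_pos t Ht). pose proof (rr_pos c2 chi t Hc ltac:(lra)).
  unfold Qf. eapply D_eq. apply D_plus. apply D_sq. apply (Dpsi _ _ _ _ _ _ H Ht).
  apply D_div. apply D_sq. apply (Du _ _ _ _ _ _ H Ht). apply Dss.
  unfold ss; apply Rmult_integral_contrapositive; split; lra.
  cbv beta. unfold ss, uu, sd in *. field. split; lra. Qed.

Lemma DZ c2 chi psi dpsi d2psi t : ODEH c2 chi psi dpsi d2psi -> -1 < t < 1 -> 0 <= c2 < chi ->
  derivable_pt_lim (Zf c2 chi psi dpsi) t
   (sd c2 chi t * Qf c2 chi psi dpsi t ^ 2 + ss c2 chi t * (2 * Qf c2 chi psi dpsi t * (- sd c2 chi t * uu dpsi t ^ 2 / ss c2 chi t ^ 2))).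
Proof. intros H Ht Hc. unfold Zf. eapply D_eq. apply D_mult. apply Dss. apply D_sq.
  apply (DQ _ _ _ _ _ _ H Ht Hc). cbv beta. ring. Qed.

Lemma Dh c2 chi t : -1 < t < 1 -> 0 <= c2 < chi ->
  derivable_pt_lim (hf c2 chi) t (hdf c2 chi t).
Proof. intros Ht Hc. pose proof (rr_pos c2 chi t Hc ltac:(lra)).
  unfold hf. eapply D_eq. apply D_div. apply Dsd. apply Drr. lra.
  unfold hdf. field. lra. Qed.

Lemma Dpu c2 chi psi dpsi d2psi t : ODEH c2 chi psi dpsi d2psi -> -1 < t < 1 ->
  derivable_pt_lim (fun t => psi t * uu dpsi t) t (dpsi t * uu dpsi t - rr c2 chi t * psi t ^ 2).
Proof. intros H Ht. eapply D_eq. apply D_mult. apply (Dpsi _ _ _ _ _ _ H Ht).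
  apply (Du _ _ _ _ _ _ H Ht). simpl. ring. Qed.

Lemma DY c2 chi psi dpsi d2psi t : ODEH c2 chi psi dpsi d2psi -> -1 < t < 1 -> 0 <= c2 < chi ->
  derivable_pt_lim (Yf c2 chi psi dpsi) t
   (psi t * uu dpsi t * (hdf c2 chi t * Qf c2 chi psi dpsi t
        - hf c2 chi t * sd c2 chi t * uu dpsi t ^ 2 / ss c2 chi t ^ 2)).
Proof. intros H Ht Hc. pose proof (pp_pos t Ht). pose proof (rr_pos c2 chi t Hc ltac:(lra)).
  unfold Yf. eapply D_eq. apply D_plus. apply (DZ _ _ _ _ _ _ H Ht Hc).
  apply D_mult. apply D_mult. apply (Dh _ _ _ Ht Hc). apply (DQ _ _ _ _ _ _ H Ht Hc).
  apply (Dpu _ _ _ _ _ _ H Ht).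
  cbv beta. unfold Qf, hf, ss, uu, sd in *. field. split; lra. Qed.

Lemma DE c2 chi psi dpsi d2psi t : ODEH c2 chi psi dpsi d2psi -> -1 < t < 1 ->
  derivable_pt_lim (Ef c2 chi psi dpsi) t (sd c2 chi t * psi t ^ 2).
Proof. intros H Ht. unfold Ef. eapply D_eq. apply D_plus. apply D_mult. apply Dss.
  apply D_sq. apply (Dpsi _ _ _ _ _ _ H Ht). apply D_sq. apply (Du _ _ _ _ _ _ H Ht).
  cbv beta. unfold ss, uu. ring. Qed.

Lemma lim_cont f x l : derivable_pt_lim f x l -> continuity_pt f x.
Proof. intros H. apply derivable_continuous_pt. exists l. exact H. Qed.

Lemma ODEH_opp c2 chi psi dpsi d2psi : ODEH c2 chi psi dpsi d2psi ->
  ODEH c2 chi (fun x => - psi x) (fun x => - dpsi x) (fun x => - d2psi x).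
Proof. intros H x Hx. destruct (H x Hx) as [H1 [H2 H3]]. split; [|split].
  - apply (derivable_pt_lim_opp psi). exact H1.
  - apply (derivable_pt_lim_opp dpsi). exact H2.
  - lra. Qed.

Lemma u_lip c2 chi psi dpsi d2psi t y B : ODEH c2 chi psi dpsi d2psi -> 0 <= c2 <= chi ->
  0 <= t <= y -> y < 1 -> (forall z, t <= z <= y -> Rabs (psi z) <= B) ->
  Rabs (uu dpsi y - uu dpsi t) <= chi * B * (y - t).
Proof.
  intros H Hc Ht Hy HB.
  apply (lip (uu dpsi) (fun z => - rr c2 chi z * psi z)); try lra.
  - intros z Hz. apply (Du _ _ _ _ _ _ H). lra.
  - intros z Hz. assert (0 <= rr c2 chi z <= chi).
    { unfold rr. assert (z^2 <= 1) by nra. split; nra. }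
    cbv beta. replace (- rr c2 chi z * psi z) with (-(rr c2 chi z * psi z)) by ring.
    rewrite Rabs_Ropp, Rabs_mult, (Rabs_right (rr _ _ _)) by lra.
    assert (Rabs (psi z) <= B) by (apply HB; lra).
    pose proof (Rabs_pos (psi z)). nra.
  - intros z Hz. apply (lim_cont _ _ _ (Du _ _ _ _ _ z H ltac:(lra))).
Qed.

Lemma L1pos c2 chi psi dpsi d2psi t B : ODEH c2 chi psi dpsi d2psi -> 0 <= c2 <= chi -> 0 < chi ->
  0 <= t < 1 -> (forall z, t <= z < 1 -> Rabs (psi z) <= B) ->
  uu dpsi t <= 2 * chi * B * (1 - t).
Proof.
  intros H Hc Hchi Ht HB.
  assert (HB0 : 0 <= B) by (pose proof (HB t ltac:(lra)); pose proof (Rabs_pos (psi t)); lra).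
  destruct (Rle_lt_dec (uu dpsi t) (2 * chi * B * (1 - t))) as [|Ha]; [assumption|exfalso].
  set (a := uu dpsi t) in *.
  assert (0 <= 2 * chi * B * (1 - t)) by (repeat apply Rmult_le_pos; lra).
  assert (Hapos : 0 < a) by lra.
  assert (Hu : forall z, t <= z < 1 -> a / 2 < uu dpsi z).
  { intros z Hz. pose proof (u_lip _ _ _ _ _ t z B H Hc ltac:(lra) ltac:(lra)
        ltac:(intros; apply HB; lra)) as Hl.
    apply Rabs_le_inv in Hl. fold a in Hl.
    assert (chi * B * (z - t) <= chi * B * (1 - t)).
    { apply Rmult_le_compat_l. apply Rmult_le_pos; lra. lra. }
    lra. }
  set (k := (8 * B + 4) / a).
  assert (Hk : 0 < k) by (unfold k; apply Rdiv_lt_0_compat; lra).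
  set (y := 1 - (1 - t) * exp (- k)).
  assert (He : 0 < exp (- k) < 1).
  { split. apply exp_pos. rewrite <- exp_0. apply exp_increasing. lra. }
  assert (Hy : t < y < 1) by (unfold y; nra).
  assert (Hln : ln (1 - y) = ln (1 - t) - k).
  { unfold y. replace (1 - (1 - (1 - t) * exp (- k))) with ((1 - t) * exp (- k)) by ring.
    rewrite ln_mult by lra. rewrite ln_exp. ring. }
  assert (Hmono : psi t + a / 4 * ln (1 - t) <= psi y + a / 4 * ln (1 - y)).
  { apply (mono_up (fun z => psi z + a / 4 * ln (1 - z))
             (fun z => dpsi z + a / 4 * (-1 / (1 - z)))); try lra.
    - intros z Hz. eapply D_eq. apply D_plus. apply (Dpsi _ _ _ _ _ _ H). lra.
      apply D_mult. apply D_const. apply D_ln. apply D_minus. apply D_const. apply D_id. lra.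
      cbv beta. field. lra.
    - intros z Hz. pose proof (Hu z ltac:(lra)) as Hu1. unfold uu, pp in Hu1.
      assert (Hp : 0 < 1 - z) by lra.
      assert (Hp2 : 0 < 1 - z^2) by nra.
      assert (0 < dpsi z).
      { destruct (Rle_lt_dec (dpsi z) 0); [|lra].
        assert ((1 - z^2) * dpsi z <= 0) by (apply prod_nonpos; lra). lra. }
      assert (1 - z^2 <= 2 * (1 - z)) by nra.
      assert (dpsi z * (2 * (1 - z)) >= a / 2) by nra.
      assert (Heq : a / 4 * (-1 / (1 - z)) = - (a / (4 * (1 - z)))) by (field; lra).
      rewrite Heq.
      assert (a / (4 * (1 - z)) <= dpsi z).
      { apply Rmult_le_reg_r with (4 * (1 - z)); [lra|].
        unfold Rdiv. rewrite Rmult_assoc, Rinv_l by lra. lra. }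
      lra. }
  rewrite Hln in Hmono.
  assert (Hk2 : a / 4 * k = 2 * B + 1) by (unfold k; field; lra).
  pose proof (HB t ltac:(lra)) as Ht1. pose proof (HB y ltac:(lra)) as Hy1.
  apply Rabs_le_inv in Ht1. apply Rabs_le_inv in Hy1. lra.
Qed.

Lemma L1 c2 chi psi dpsi d2psi t B : ODEH c2 chi psi dpsi d2psi -> 0 <= c2 <= chi -> 0 < chi ->
  0 <= t < 1 -> (forall z, t <= z < 1 -> Rabs (psi z) <= B) ->
  Rabs (uu dpsi t) <= 2 * chi * B * (1 - t).
Proof.
  intros H Hc Hchi Ht HB. apply Rabs_le. split.
  - pose proof (L1pos c2 chi _ _ _ t B (ODEH_opp _ _ _ _ _ H) Hc Hchi Ht).
    assert (uu (fun x => - dpsi x) t <= 2 * chi * B * (1 - t)).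
    { apply H0. intros z Hz. rewrite Rabs_Ropp. auto. }
    unfold uu in *. lra.
  - apply (L1pos c2 chi psi dpsi d2psi t B H Hc Hchi Ht HB).
Qed.

Lemma dpsi_bound c2 chi psi dpsi d2psi t B : ODEH c2 chi psi dpsi d2psi -> 0 <= c2 <= chi -> 0 < chi ->
  0 <= t < 1 -> (forall z, t <= z < 1 -> Rabs (psi z) <= B) ->
  Rabs (dpsi t) <= 2 * chi * B.
Proof.
  intros. pose proof (L1 _ _ _ _ _ t B H H0 H1 H2 H3). unfold uu, pp in H4.
  rewrite Rabs_mult, (Rabs_right (1 - t^2)) in H4 by nra.
  assert (0 <= B) by (pose proof (H3 t ltac:(lra)); pose proof (Rabs_pos (psi t)); lra).
  pose proof (Rabs_pos (dpsi t)).
  assert (1 - t <= 1 - t^2) by nra. nra.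
Qed.

Lemma sq_cont psi x : continuity_pt psi x -> continuity_pt (fun y => psi y ^ 2) x.
Proof. intros H. apply (continuity_pt_locally_ext (mult_fct psi psi) _ 1). lra.
  intros y _. unfold mult_fct. ring. apply continuity_pt_mult; auto. Qed.

Lemma prim_exists psi :
  (forall x, -1 <= x <= 1 -> continuity_pt psi x) ->
  (exists pr : Riemann_integrable (fun x => psi x ^ 2) (-1) 1, RiemannInt pr = 1) ->
  exists P : R -> R, (forall x, -1 <= x <= 1 -> derivable_pt_lim P x (psi x ^ 2)) /\
     P (-1) = 0 /\ P 1 = 1.
Proof.
  intros Hc [pr Hpr].
  assert (h : -1 <= 1) by lra.
  assert (C0 : forall x, -1 <= x <= 1 -> continuity_pt (fun y => psi y ^ 2) x)
    by (intros; apply sq_cont; auto).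
  exists (primitive h (FTC_P1 h C0)). split; [|split].
  - intros x Hx. apply RiemannInt_P28. exact Hx.
  - unfold primitive. destruct (Rle_dec (-1) (-1)); [|lra]. destruct (Rle_dec (-1) 1); [|lra].
    apply RiemannInt_P9.
  - unfold primitive. destruct (Rle_dec (-1) 1); [|lra]. destruct (Rle_dec 1 1); [|lra].
    rewrite <- Hpr. apply RiemannInt_P5.
Qed.

Lemma even_dpsi0 c2 chi psi dpsi d2psi : ODEH c2 chi psi dpsi d2psi ->
  (forall x, -1 <= x <= 1 -> psi (- x) = psi x) -> dpsi 0 = 0.
Proof.
  intros H Hp.
  assert (D1 : derivable_pt_lim (fun x => psi (- x)) 0 (dpsi 0 * -1)).
  { apply (D_comp (fun x => - x) psi). apply (derivable_pt_lim_opp id). apply derivable_pt_lim_id.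
    rewrite Ropp_0. apply (Dpsi _ _ _ _ _ _ H). lra. }
  assert (D2 : derivable_pt_lim psi 0 (dpsi 0 * -1)).
  { apply (derivable_pt_lim_locally_ext (fun x => psi (- x)) psi 0 (-1) 1); [lra| |exact D1].
    intros z Hz. apply Hp. lra. }
  pose proof (uniqueness_limite psi 0 _ _ (Dpsi _ _ _ _ _ 0 H ltac:(lra)) D2). lra.
Qed.

Lemma lipsi c2 chi psi dpsi d2psi M a b : ODEH c2 chi psi dpsi d2psi -> 0 <= c2 <= chi -> 0 < chi ->
  (forall x, -1 <= x <= 1 -> continuity_pt psi x) ->
  (forall x, -1 <= x <= 1 -> Rabs (psi x) <= M) ->
  0 <= a <= 1 -> 0 <= b <= 1 -> Rabs (psi b - psi a) <= 2 * chi * M * Rabs (b - a).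
Proof.
  intros H Hc Hchi Hcont HM Ha Hb.
  assert (K : forall a b, 0 <= a <= b -> b <= 1 -> Rabs (psi b - psi a) <= 2 * chi * M * (b - a)).
  { intros a' b' Hab Hb'. apply (lip psi dpsi); try lra.
    - intros t Ht. apply (Dpsi _ _ _ _ _ _ H). lra.
    - intros t Ht. apply (dpsi_bound _ _ _ _ _ t M H Hc Hchi). lra. intros; apply HM; lra.
    - intros t Ht. apply Hcont. lra. }
  destruct (Rle_lt_dec a b).
  - rewrite (Rabs_right (b - a)) by lra. apply K; lra.
  - rewrite <- Rabs_Ropp, Ropp_minus_distr, (Rabs_left (b - a)) by lra.
    replace (- (b - a)) with (a - b) by ring. apply K; lra.
Qed.

Lemma max_exists psi eps :
  (forall x, -1 <= x <= 1 -> continuity_pt psi x) ->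
  (eps = 1 \/ eps = -1) ->
  (forall x, -1 <= x <= 1 -> psi (- x) = eps * psi x) ->
  exists tm, 0 <= tm <= 1 /\ forall x, -1 <= x <= 1 -> Rabs (psi x) <= Rabs (psi tm).
Proof.
  intros Hc He Hp.
  destruct (continuity_ab_maj (fun x => Rabs (psi x)) (-1) 1) as [Mx [H1 H2]]; [lra| |].
  { intros x Hx. apply (continuity_pt_locally_ext (comp Rabs psi) _ 1). lra. intros; reflexivity.
    apply continuity_pt_comp. apply Hc; auto. apply Rcontinuity_abs. }
  destruct (Rle_lt_dec 0 Mx).
  - exists Mx. split; [lra|]. exact H1.
  - exists (- Mx). split; [lra|]. intros x Hx. rewrite Hp by lra. rewrite Rabs_mult.
    replace (Rabs eps) with 1 by (destruct He; subst; unfold Rabs; destruct Rcase_abs; lra).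
    rewrite Rmult_1_l. apply H1; auto.
Qed.

Lemma chi_lb_even_pos c2 chi psi dpsi d2psi tm M : ODEH c2 chi psi dpsi d2psi -> 0 <= c2 < chi ->
  (forall x, -1 <= x <= 1 -> continuity_pt psi x) ->
  (forall x, -1 <= x <= 1 -> Rabs (psi x) <= M) ->
  dpsi 0 = 0 -> 0 <= tm <= 1 -> psi tm = M -> 0 < M -> chi < 1/4 -> False.
Proof.
  intros H Hc Hcont HM Hd0 Htm Hpm HM0 Hchi.
  assert (Hchi0 : 0 < chi) by lra.
  assert (Hpos : forall t, 0 <= t <= 1 -> M / 2 <= psi t).
  { intros t Ht. pose proof (lipsi _ _ _ _ _ M tm t H ltac:(lra) Hchi0 Hcont HM Htm Ht) as L.
    apply Rabs_le_inv in L.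
    assert (Rabs (t - tm) <= 1) by (apply Rabs_le; lra).
    assert (2 * chi * M * Rabs (t - tm) <= 2 * chi * M) by
      (rewrite <- (Rmult_1_r (2 * chi * M)) at 2; apply prod_le_l; [|lra];
       repeat apply Rmult_le_pos; lra).
    nra. }
  set (d := chi - c2).
  set (y := 1 - d / chi / 8).
  assert (Hdl : 0 < d / chi <= 1) by (unfold d; split; [apply Rdiv_lt_0_compat; lra|];
     apply Rmult_le_reg_r with chi; [lra|]; unfold Rdiv; rewrite Rmult_assoc, Rinv_l; lra).
  assert (Hy : 7/8 <= y < 1) by (unfold y; lra).
  assert (Hm : uu dpsi y + d * (M / 2) * y <= uu dpsi 0 + d * (M / 2) * 0).
  { apply (mono_down (fun t => uu dpsi t + d * (M / 2) * t)
      (fun t => - rr c2 chi t * psi t + d * (M / 2))); try lra.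
    - intros t Ht. eapply D_eq. apply D_plus. apply (Du _ _ _ _ _ _ H). lra.
      apply D_mult. apply D_const. apply D_id. cbv beta. ring.
    - intros t Ht. assert (d <= rr c2 chi t) by (unfold d, rr; assert (t^2 <= 1) by nra; nra).
      pose proof (Hpos t ltac:(lra)). assert (0 < d) by (unfold d; lra).
      assert (d * (M / 2) <= rr c2 chi t * psi t) by
        (apply Rmult_le_compat; lra). lra. }
  unfold uu at 2 in Hm. rewrite Hd0 in Hm.
  pose proof (L1 _ _ _ _ _ y M H ltac:(lra) Hchi0 ltac:(lra) ltac:(intros; apply HM; lra)) as L.
  apply Rabs_le_inv in L.
  assert (E1 : 2 * chi * M * (1 - y) = d * M / 4) by (unfold y; field; lra).
  assert (0 < d) by (unfold d; lra).
  assert (d * (M / 2) * y <= d * M / 4) by lra.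
  assert (d * M * (y - 1/2) <= 0) by lra.
  assert (0 < d * M * (y - 1/2)) by (apply Rmult_lt_0_compat; [apply Rmult_lt_0_compat|]; lra).
  lra.
Qed.

Lemma chi_lb c2 chi psi dpsi d2psi eps tm : ODEH c2 chi psi dpsi d2psi -> 0 <= c2 < chi ->
  (forall x, -1 <= x <= 1 -> continuity_pt psi x) ->
  (eps = 1 \/ eps = -1) ->
  (forall x, -1 <= x <= 1 -> psi (- x) = eps * psi x) ->
  0 <= tm <= 1 -> (forall x, -1 <= x <= 1 -> Rabs (psi x) <= Rabs (psi tm)) ->
  0 < Rabs (psi tm) -> 1/4 <= chi.
Proof.
  intros H Hc Hcont He Hp Htm HM HM0. set (M := Rabs (psi tm)) in *.
  destruct (Rle_lt_dec (1/4) chi) as [|Hlt]; [assumption|exfalso].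
  destruct He as [He|He]; subst eps.
  - assert (Hd0 : dpsi 0 = 0).
    { apply (even_dpsi0 _ _ _ _ _ H). intros x Hx. rewrite Hp; auto; ring. }
    destruct (Rle_lt_dec 0 (psi tm)).
    + apply (chi_lb_even_pos _ _ _ _ _ tm M H Hc Hcont HM Hd0 Htm); auto.
      unfold M; rewrite Rabs_right; lra.
    + apply (chi_lb_even_pos _ _ _ _ _ tm M (ODEH_opp _ _ _ _ _ H) Hc); auto.
      * intros x Hx. apply (continuity_pt_locally_ext (opp_fct psi) _ 1). lra.
        intros; reflexivity. apply continuity_pt_opp. auto.
      * intros x Hx. rewrite Rabs_Ropp. auto.
      * cbv beta. rewrite Hd0. ring.
      * unfold M; rewrite Rabs_left; lra.
  - assert (H0 : psi 0 = 0) by (pose proof (Hp 0 ltac:(lra)); rewrite Ropp_0 in H0; lra).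
    pose proof (lipsi _ _ _ _ _ M 0 tm H ltac:(lra) ltac:(lra) Hcont HM ltac:(lra) Htm) as L.
    rewrite H0, Rminus_0_r, Rminus_0_r in L. fold M in L.
    rewrite (Rabs_right tm) in L by lra.
    assert (2 * chi * M * tm <= 2 * chi * M) by
      (rewrite <- (Rmult_1_r (2 * chi * M)) at 2; apply prod_le_l; [|lra];
       repeat apply Rmult_le_pos; unfold M; try apply Rabs_pos; lra).
    nra.
Qed.

Lemma P_incr psi P a b : (forall x, -1 <= x <= 1 -> derivable_pt_lim P x (psi x ^ 2)) ->
  -1 <= a <= b -> b <= 1 -> P a <= P b.
Proof. intros HP Ha Hb. apply (mono_up P (fun x => psi x ^ 2)); try lra.
  intros; apply HP; lra. intros; apply pow2_ge_0. Qed.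

Lemma P_diff psi P a b : (forall x, -1 <= x <= 1 -> derivable_pt_lim P x (psi x ^ 2)) ->
  P (-1) = 0 -> P 1 = 1 -> -1 <= a <= b -> b <= 1 -> P b - P a <= 1.
Proof. intros HP H0 H1 Ha Hb.
  pose proof (P_incr psi P (-1) a HP ltac:(lra) ltac:(lra)).
  pose proof (P_incr psi P b 1 HP ltac:(lra) ltac:(lra)). lra. Qed.

Lemma sq_le_of_abs x M : Rabs x <= M -> x ^ 2 <= M ^ 2.
Proof. intros H. rewrite <- (pow2_abs x). pose proof (Rabs_pos x).
  apply pow_incr; lra. Qed.

Lemma M_lb psi P M : (forall x, -1 <= x <= 1 -> derivable_pt_lim P x (psi x ^ 2)) ->
  P (-1) = 0 -> P 1 = 1 -> (forall x, -1 <= x <= 1 -> Rabs (psi x) <= M) -> 1 <= 2 * M ^ 2.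
Proof. intros HP H0 H1 HM.
  assert (P 1 - M ^ 2 * 1 <= P (-1) - M ^ 2 * (-1)).
  { apply (mono_down (fun t => P t - M ^ 2 * t) (fun t => psi t ^ 2 - M ^ 2)); try lra.
    - intros t Ht. eapply D_eq. apply D_minus. apply HP; lra. apply D_mult. apply D_const.
      apply D_id. cbv beta. ring.
    - intros t Ht. pose proof (sq_le_of_abs _ _ (HM t Ht)). lra. }
  lra. Qed.

Lemma M_ub_small c2 chi psi dpsi d2psi P tm : ODEH c2 chi psi dpsi d2psi -> 0 <= c2 < chi ->
  (forall x, -1 <= x <= 1 -> continuity_pt psi x) ->
  (forall x, -1 <= x <= 1 -> derivable_pt_lim P x (psi x ^ 2)) ->
  P (-1) = 0 -> P 1 = 1 ->
  0 <= tm <= 1 -> (forall x, -1 <= x <= 1 -> Rabs (psi x) <= Rabs (psi tm)) ->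
  1/4 <= chi -> Rabs (psi tm) ^ 2 <= 64 * chi.
Proof.
  intros H Hc Hcont HP H0 H1 Htm HM Hchi. set (M := Rabs (psi tm)) in *.
  assert (HM0 : 0 <= M) by apply Rabs_pos.
  set (l := 1 / (8 * chi)).
  assert (Hl : 0 < l <= 1/2).
  { unfold l. split. apply Rdiv_lt_0_compat; lra.
    apply Rmult_le_reg_r with (8 * chi); [lra|]. unfold Rdiv. rewrite Rmult_assoc, Rinv_l; lra. }
  assert (Hcl : 2 * chi * M * l = M / 4) by (unfold l; field; lra).
  assert (Hnear : forall t, 0 <= t <= 1 -> Rabs (t - tm) <= l -> M ^ 2 / 4 <= psi t ^ 2).
  { intros t Ht Hd. pose proof (lipsi _ _ _ _ _ M tm t H ltac:(lra) ltac:(lra) Hcont HM Htm Ht) as L.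
    assert (2 * chi * M * Rabs (t - tm) <= M / 4) by
      (rewrite <- Hcl; apply prod_le_l; [repeat apply Rmult_le_pos|]; lra).
    assert (Rabs (psi t) >= 3 * M / 4).
    { pose proof (Rabs_triang_inv (psi tm) (psi t)). rewrite <- Rabs_Ropp, Ropp_minus_distr in L.
      fold M in H3. lra. }
    rewrite <- (pow2_abs (psi t)). nra. }
  assert (Hint : exists a b, 0 <= a /\ a + l / 2 = b /\ b < 1 /\
      forall t, a <= t <= b -> Rabs (t - tm) <= l).
  { destruct (Rle_lt_dec (1/2) tm).
    - exists (tm - l), (tm - l / 2). repeat split; try lra.
      intros t Ht. apply Rabs_le; lra.
    - exists tm, (tm + l / 2). repeat split; try lra.
      intros t Ht. apply Rabs_le; lra. }
  destruct Hint as [a [b [Ha [Hab [Hb Hin]]]]].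
  assert (P a - M ^ 2 / 4 * a <= P b - M ^ 2 / 4 * b).
  { apply (mono_up (fun t => P t - M ^ 2 / 4 * t) (fun t => psi t ^ 2 - M ^ 2 / 4)); try lra.
    - intros t Ht. eapply D_eq. apply D_minus. apply HP; lra. apply D_mult. apply D_const.
      apply D_id. cbv beta. ring.
    - intros t Ht. pose proof (Hnear t ltac:(lra) (Hin t Ht)). lra. }
  pose proof (P_diff psi P a b HP H0 H1 ltac:(lra) ltac:(lra)).
  assert (M ^ 2 / 4 * (l / 2) <= 1) by nra.
  unfold l in H4. assert (M ^ 2 / (64 * chi) <= 1) by (replace (M ^ 2 / (64 * chi)) with (M ^ 2 / 4 * (1 / (8 * chi) / 2)) by (field; lra); lra).
  apply Rmult_le_reg_r with (/ (64 * chi)). apply Rinv_0_lt_compat; lra.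
  rewrite Rinv_r by lra. exact H5.
Qed.

Lemma abs_le_of_sq x y : 0 <= y -> x ^ 2 <= y ^ 2 -> Rabs x <= y.
Proof. intros Hy H. destruct (Rle_lt_dec (Rabs x) y); auto.
  rewrite <- (pow2_abs x) in H. pose proof (Rabs_pos x). nra. Qed.

Lemma amgm s ps U : 0 < s -> 4 * s * (ps * U) ^ 2 <= (s * ps ^ 2 + U ^ 2) ^ 2.
Proof. intros. replace ((s * ps ^ 2 + U ^ 2) ^ 2) with (4 * s * (ps * U) ^ 2 + (s * ps ^ 2 - U ^ 2) ^ 2) by ring. pose proof (pow2_ge_0 (s * ps ^ 2 - U ^ 2)). lra. Qed.

Lemma Q_eq s ps U : 0 < s -> ps ^ 2 + U ^ 2 / s = (s * ps ^ 2 + U ^ 2) / s.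
Proof. intros. field. lra. Qed.

Lemma alg_psU s ps U : 0 < s -> (ps * U) ^ 2 <= s * (ps ^ 2 + U ^ 2 / s) ^ 2 / 4.
Proof. intros Hs. rewrite Q_eq by lra. set (E := s * ps ^ 2 + U ^ 2).
  pose proof (amgm s ps U Hs). fold E in H.
  replace (s * (E / s) ^ 2 / 4) with (E ^ 2 / (4 * s)) by (field; lra).
  apply Rmult_le_reg_r with (4 * s). lra. unfold Rdiv. rewrite Rmult_assoc, Rinv_l by lra. lra. Qed.

Lemma alg_cmp s ps U h : 0 < s -> 4 * h ^ 2 <= s ->
  Rabs (h * (ps ^ 2 + U ^ 2 / s) * (ps * U)) <= s * (ps ^ 2 + U ^ 2 / s) ^ 2 / 4.
Proof. intros Hs Hh. set (Q := ps ^ 2 + U ^ 2 / s).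
  assert (HQ : 0 <= Q) by (unfold Q; assert (0 <= U^2/s) by (apply Rdiv_le_0_compat; nra); nra).
  pose proof (alg_psU s ps U Hs) as H1. fold Q in H1.
  apply abs_le_of_sq. apply Rmult_le_pos. 2: lra. apply Rmult_le_pos; nra.
  replace ((h * Q * (ps * U)) ^ 2) with (h^2 * Q^2 * (ps * U)^2) by ring.
  apply Rle_trans with ((s / 4) * Q ^ 2 * (s * Q ^ 2 / 4)).
  - apply Rmult_le_compat. nra. nra. apply Rmult_le_compat_r; nra. exact H1.
  - right. field.
Qed.

Lemma alg_der s ps U hd hsd al be : 0 < s -> Rabs hd <= al -> 0 <= hsd <= be * s -> 0 <= be ->
  (ps * U * (hd * (ps ^ 2 + U ^ 2 / s) - hsd * U ^ 2 / s ^ 2)) ^ 2 <=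
  (al + be) ^ 2 * (s * (ps ^ 2 + U ^ 2 / s) ^ 2) ^ 2 / (4 * s).
Proof. intros Hs Hal Hb Hbe. set (Q := ps ^ 2 + U ^ 2 / s).
  assert (HU : 0 <= U ^ 2 / s) by (apply Rdiv_le_0_compat; nra).
  assert (HUQ : U ^ 2 / s <= Q) by (unfold Q; nra).
  assert (HQ : 0 <= Q) by lra.
  pose proof (alg_psU s ps U Hs) as H1. fold Q in H1.
  assert (Hal0 : 0 <= al) by (pose proof (Rabs_pos hd); lra).
  assert (B1 : Rabs (hd * Q - hsd * U ^ 2 / s ^ 2) <= (al + be) * Q).
  { eapply Rle_trans. apply Rabs_triang. rewrite Rabs_Ropp, !Rabs_mult, (Rabs_right Q) by lra.
    replace (hsd * U ^ 2 / s ^ 2) with ((hsd / s) * (U ^ 2 / s)) by (field; lra).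
    rewrite Rabs_mult, (Rabs_right (U^2/s)) by lra.
    assert (Rabs (hsd / s) <= be).
    { rewrite Rabs_right. apply Rmult_le_reg_r with s; [lra|]. unfold Rdiv.
      rewrite Rmult_assoc, Rinv_l by lra. lra. apply Rle_ge, Rdiv_le_0_compat; lra. }
    pose proof (Rabs_pos (hsd/s)).
    assert (Rabs hd * Q <= al * Q) by (apply Rmult_le_compat_r; lra).
    assert (Rabs (hsd / s) * (U ^ 2 / s) <= be * Q) by (apply Rmult_le_compat; lra).
    lra. }
  assert (B2 : (hd * Q - hsd * U ^ 2 / s ^ 2) ^ 2 <= ((al + be) * Q) ^ 2).
  { rewrite <- (pow2_abs (hd * Q - hsd * U ^ 2 / s ^ 2)). apply pow_incr. split; [apply Rabs_pos|auto]. }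
  replace ((ps * U * (hd * Q - hsd * U ^ 2 / s ^ 2)) ^ 2) with ((ps * U) ^ 2 * (hd * Q - hsd * U ^ 2 / s ^ 2) ^ 2) by ring.
  apply Rle_trans with ((s * Q ^ 2 / 4) * ((al + be) * Q) ^ 2).
  - apply Rmult_le_compat; try apply pow2_ge_0; auto.
  - right. field. lra.
Qed.

Lemma bnds c2 chi dl t : 0 < chi -> 0 < dl <= 1 -> c2 = chi * (1 - dl) -> 0 <= t < 1 ->
  chi * dl <= rr c2 chi t <= chi /\ -4 * chi <= sd c2 chi t <= 0 /\
  Rabs (sdd c2 chi t) <= 12 * chi /\ Rabs (hdf c2 chi t) <= 20 / dl ^ 2 /\
  0 <= hf c2 chi t * sd c2 chi t <= 16 * chi / dl.
Proof.
  intros Hchi Hdl Hc2 Ht.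
  assert (Ht2 : 0 <= t ^ 2 < 1) by nra.
  assert (Hc : 0 <= c2 <= chi) by (subst; nra).
  assert (Hr : chi * dl <= rr c2 chi t <= chi) by (unfold rr; subst; nra).
  assert (Hp : 0 < pp t <= 1) by (unfold pp; lra).
  assert (Hsd : -4 * chi <= sd c2 chi t <= 0).
  { unfold sd. assert (0 <= c2 * pp t <= chi) by nra.
    assert (0 <= t * rr c2 chi t <= chi) by nra.
    assert (0 <= t * (c2 * pp t) <= chi) by nra. nra. }
  assert (Hsdd : Rabs (sdd c2 chi t) <= 12 * chi).
  { unfold sdd. apply Rabs_le. assert (0 <= c2 * pp t <= chi) by nra.
    assert (0 <= c2 * t^2 <= chi) by nra. nra. }
  assert (Hrp : 0 < rr c2 chi t) by nra.
  split; [auto|split; [auto|split; [auto|split]]].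
  - unfold hdf.
    replace ((sdd c2 chi t * rr c2 chi t - sd c2 chi t * (-2 * c2 * t)) / rr c2 chi t ^ 2)
      with (sdd c2 chi t / rr c2 chi t + (2 * c2 * t) * sd c2 chi t / rr c2 chi t ^ 2) by (field; lra).
    eapply Rle_trans. apply Rabs_triang.
    assert (Rabs (sdd c2 chi t / rr c2 chi t) <= 12 / dl).
    { unfold Rdiv. rewrite Rabs_mult, Rabs_inv, (Rabs_right (rr _ _ _)) by lra.
      apply Rmult_le_reg_r with (rr c2 chi t); [lra|]. rewrite Rmult_assoc, Rinv_l by lra.
      apply Rle_trans with (12 * chi); [lra|].
      replace (12 * / dl * rr c2 chi t) with (12 * (rr c2 chi t / dl)) by (field; lra).
      assert (chi <= rr c2 chi t / dl).
      { apply Rmult_le_reg_r with dl; [lra|]. unfold Rdiv. rewrite Rmult_assoc, Rinv_l; lra. }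
      lra. }
    assert (Rabs (2 * c2 * t * sd c2 chi t / rr c2 chi t ^ 2) <= 8 / dl ^ 2).
    { unfold Rdiv. rewrite Rabs_mult, Rabs_inv, (Rabs_right (rr _ _ _ ^ 2)) by (apply Rle_ge, pow2_ge_0).
      apply Rmult_le_reg_r with (rr c2 chi t ^ 2); [nra|]. rewrite Rmult_assoc, Rinv_l by nra.
      apply Rle_trans with (8 * chi ^ 2).
      { rewrite Rabs_mult. rewrite (Rabs_right (2 * c2 * t)) by nra.
        assert (Rabs (sd c2 chi t) <= 4 * chi) by (apply Rabs_le; lra).
        assert (2 * c2 * t <= 2 * chi) by nra. pose proof (Rabs_pos (sd c2 chi t)). nra. }
      replace (8 * / dl ^ 2 * rr c2 chi t ^ 2) with (8 * (rr c2 chi t / dl) ^ 2) by (field; lra).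
      assert (chi <= rr c2 chi t / dl).
      { apply Rmult_le_reg_r with dl; [lra|]. unfold Rdiv. rewrite Rmult_assoc, Rinv_l; lra. }
      nra. }
    assert (12 / dl <= 12 / dl ^ 2).
    { unfold Rdiv. apply Rmult_le_compat_l; [lra|]. apply Rinv_le_contravar. nra.
      nra. }
    replace (20 / dl ^ 2) with (12 / dl ^ 2 + 8 / dl ^ 2) by (field; lra). lra.
  - unfold hf. replace (sd c2 chi t / rr c2 chi t * sd c2 chi t) with (sd c2 chi t ^ 2 / rr c2 chi t) by (field; lra).
    split. apply Rdiv_le_0_compat; [apply pow2_ge_0|lra].
    apply Rmult_le_reg_r with (rr c2 chi t); [lra|]. unfold Rdiv. rewrite Rmult_assoc, Rinv_l by lra.
    apply Rle_trans with (16 * chi ^ 2). nra.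
    replace (16 * chi * / dl * rr c2 chi t) with (16 * chi * (rr c2 chi t / dl)) by (field; lra).
    assert (chi <= rr c2 chi t / dl).
    { apply Rmult_le_reg_r with dl; [lra|]. unfold Rdiv. rewrite Rmult_assoc, Rinv_l; lra. }
    nra.
Qed.

Lemma h_small c2 chi dl t : 0 < chi -> 0 < dl <= 1 -> c2 = chi * (1 - dl) -> 0 <= t < 1 ->
  64 <= chi * pp t * dl ^ 5 -> 4 * hf c2 chi t ^ 2 <= ss c2 chi t.
Proof.
  intros Hchi Hdl Hc2 Ht HK.
  destruct (bnds c2 chi dl t Hchi Hdl Hc2 Ht) as [Hr [Hsd _]].
  assert (Hp : 0 < pp t <= 1) by (unfold pp; nra).
  unfold hf, ss.
  assert (Hrp : 0 < rr c2 chi t) by nra.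
  assert (H1 : sd c2 chi t ^ 2 <= 16 * chi ^ 2) by nra.
  assert (H2 : 4 * (sd c2 chi t / rr c2 chi t) ^ 2 <= 64 / dl ^ 2).
  { replace (4 * (sd c2 chi t / rr c2 chi t) ^ 2) with (4 * sd c2 chi t ^ 2 / rr c2 chi t ^ 2) by (field; lra).
    apply Rmult_le_reg_r with (rr c2 chi t ^ 2). nra. unfold Rdiv.
    rewrite Rmult_assoc, Rinv_l by nra.
    replace (64 * / dl ^ 2 * rr c2 chi t ^ 2) with (64 * (rr c2 chi t / dl) ^ 2) by (field; lra).
    assert (chi <= rr c2 chi t / dl).
    { apply Rmult_le_reg_r with dl; [lra|]. unfold Rdiv. rewrite Rmult_assoc, Rinv_l; lra. }
    nra. }
  assert (H3 : 64 / dl ^ 2 <= pp t * (chi * dl)).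
  { apply Rmult_le_reg_r with (dl ^ 2). nra. unfold Rdiv. rewrite Rmult_assoc, Rinv_l by nra.
    assert (dl ^ 5 <= dl ^ 3).
    { replace (dl^5) with (dl^3 * dl^2) by ring. assert (dl^2 <= 1) by nra.
      assert (0 < dl^3) by (apply pow_lt; lra). nra. }
    assert (0 <= chi * pp t) by nra. nra. }
  assert (pp t * (chi * dl) <= pp t * rr c2 chi t) by (apply Rmult_le_compat_l; lra).
  lra.
Qed.

Lemma Ycmp c2 chi dl psi dpsi t : 0 < chi -> 0 < dl <= 1 -> c2 = chi * (1 - dl) -> 0 <= t < 1 ->
  64 <= chi * pp t * dl ^ 5 ->
  0 <= Zf c2 chi psi dpsi t /\
  3 / 4 * Zf c2 chi psi dpsi t <= Yf c2 chi psi dpsi t <= 5 / 4 * Zf c2 chi psi dpsi t.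
Proof.
  intros Hchi Hdl Hc2 Ht HK.
  pose proof (h_small c2 chi dl t Hchi Hdl Hc2 Ht HK) as Hh.
  destruct (bnds c2 chi dl t Hchi Hdl Hc2 Ht) as [Hr _].
  assert (Hp : 0 < pp t <= 1) by (unfold pp; nra).
  assert (Hs : 0 < ss c2 chi t) by (unfold ss; apply Rmult_lt_0_compat; nra).
  pose proof (alg_cmp (ss c2 chi t) (psi t) (uu dpsi t) (hf c2 chi t) Hs Hh) as Hc.
  apply Rabs_le_inv in Hc.
  unfold Yf, Zf, Qf. split. apply Rmult_le_pos; [lra|apply pow2_ge_0]. lra.
Qed.

Lemma alg_final D Z Y s p dl chi w : 0 < p <= 1 -> 0 < dl <= 1 -> 0 < chi -> p * chi * dl <= s ->
  0 <= w <= p -> 0 <= Z -> 3 / 4 * Z <= Y ->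
  D ^ 2 <= (20 / dl ^ 2 + 16 / (dl ^ 2 * p)) ^ 2 * Z ^ 2 / (4 * s) ->
  D ^ 2 * w ^ 3 * (chi * dl ^ 5) <= 576 * Y ^ 2.
Proof.
  intros Hp Hdl Hchi Hs Hw HZ HY HD.
  assert (Hs0 : 0 < s) by (assert (0 < p * chi * dl) by (repeat apply Rmult_lt_0_compat; lra); lra).
  assert (E1 : 20 / dl ^ 2 + 16 / (dl ^ 2 * p) <= 36 / (dl ^ 2 * p)).
  { replace (36 / (dl ^ 2 * p)) with (20 / (dl^2 * p) + 16 / (dl ^ 2 * p)) by (field; lra).
    apply Rplus_le_compat_r. unfold Rdiv. apply Rmult_le_compat_l; [lra|].
    apply Rinv_le_contravar. apply Rmult_lt_0_compat; [apply pow_lt|]; lra.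
    rewrite <- (Rmult_1_r (dl^2)) at 2. apply Rmult_le_compat_l; [apply pow2_ge_0|lra]. }
  assert (E0 : 0 <= 20 / dl ^ 2 + 16 / (dl ^ 2 * p)).
  { assert (0 < dl ^ 2) by (apply pow_lt; lra).
    apply Rplus_le_le_0_compat; apply Rdiv_le_0_compat; try lra. apply Rmult_lt_0_compat; lra. }
  assert (E2 : D ^ 2 <= (36 / (dl ^ 2 * p)) ^ 2 * Z ^ 2 / (4 * s)).
  { eapply Rle_trans; [exact HD|]. unfold Rdiv. apply Rmult_le_compat_r.
    left; apply Rinv_0_lt_compat; lra. apply Rmult_le_compat_r. apply pow2_ge_0.
    apply pow_incr. lra. }
  assert (E3 : D ^ 2 * (s * dl ^ 4 * p ^ 2) <= 324 * Z ^ 2).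
  { replace (324 * Z ^ 2) with ((36 / (dl ^ 2 * p)) ^ 2 * Z ^ 2 / (4 * s) * (s * dl ^ 4 * p ^ 2))
      by (field; lra).
    apply Rmult_le_compat_r. assert (0 < dl^4) by (apply pow_lt; lra).
    apply Rmult_le_pos; [apply Rmult_le_pos|apply pow2_ge_0]; lra. exact E2. }
  assert (E4 : w ^ 3 * (chi * dl) <= s * p ^ 2).
  { assert (w ^ 3 <= p ^ 3) by (apply pow_incr; lra).
    assert (0 <= chi * dl) by nra.
    apply Rle_trans with (p ^ 3 * (chi * dl)). apply Rmult_le_compat_r; lra.
    replace (p ^ 3 * (chi * dl)) with ((p * chi * dl) * p ^ 2) by ring.
    apply Rmult_le_compat_r. apply pow2_ge_0. lra. }
  assert (E5 : 324 * Z ^ 2 <= 576 * Y ^ 2).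
  { assert (9 / 16 * Z ^ 2 <= Y ^ 2).
    { replace (9/16 * Z^2) with ((3/4 * Z)^2) by field. apply pow_incr. nra. }
    lra. }
  assert (Hsp : 0 < s * p ^ 2) by (apply Rmult_lt_0_compat; nra).
  apply Rmult_le_reg_r with (s * p ^ 2); [exact Hsp|].
  apply Rle_trans with (324 * Z ^ 2 * (w ^ 3 * (chi * dl))).
  - replace (D ^ 2 * w ^ 3 * (chi * dl ^ 5) * (s * p ^ 2)) with
      ((D ^ 2 * (s * dl ^ 4 * p ^ 2)) * (w ^ 3 * (chi * dl))) by ring.
    apply Rmult_le_compat_r. assert (0 <= w^3) by (apply pow_le; lra). apply Rmult_le_pos; [lra|apply Rmult_le_pos; lra]. exact E3.
  - apply Rle_trans with (324 * Z ^ 2 * (s * p ^ 2)).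
    apply Rmult_le_compat_l. pose proof (pow2_ge_0 Z); lra. exact E4.
    apply Rmult_le_compat_r; lra.
Qed.

Lemma Yder c2 chi dl psi dpsi t : 0 < chi -> 0 < dl <= 1 -> c2 = chi * (1 - dl) -> 0 <= t < 1 ->
  64 <= chi * pp t * dl ^ 5 ->
  (psi t * uu dpsi t * (hdf c2 chi t * Qf c2 chi psi dpsi t
        - hf c2 chi t * sd c2 chi t * uu dpsi t ^ 2 / ss c2 chi t ^ 2)) ^ 2 * (1 - t) ^ 3 * (chi * dl ^ 5)
   <= 576 * Yf c2 chi psi dpsi t ^ 2.
Proof.
  intros Hchi Hdl Hc2 Ht HK.
  destruct (Ycmp c2 chi dl psi dpsi t Hchi Hdl Hc2 Ht HK) as [HZ0 [HY1 HY2]].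
  destruct (bnds c2 chi dl t Hchi Hdl Hc2 Ht) as [Hr [Hsd [_ [Hhd Hhs]]]].
  assert (Hp : 0 < pp t <= 1) by (unfold pp; nra).
  assert (Hs : 0 < ss c2 chi t) by (unfold ss; apply Rmult_lt_0_compat; nra).
  set (be := 16 / (dl ^ 2 * pp t)).
  assert (Hbe : 0 <= be) by (unfold be; apply Rdiv_le_0_compat; [lra|]; apply Rmult_lt_0_compat; nra).
  assert (Hhs2 : 0 <= hf c2 chi t * sd c2 chi t <= be * ss c2 chi t).
  { split; [lra|]. apply Rle_trans with (16 * chi / dl); [lra|].
    unfold be, ss. replace (16 / (dl ^ 2 * pp t) * (pp t * rr c2 chi t)) with (16 * (rr c2 chi t / dl) / dl)
      by (field; lra).
    assert (chi <= rr c2 chi t / dl).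
    { apply Rmult_le_reg_r with dl; [lra|]. unfold Rdiv. rewrite Rmult_assoc, Rinv_l; lra. }
    unfold Rdiv. apply Rmult_le_compat_r. left; apply Rinv_0_lt_compat; lra. lra. }
  pose proof (alg_der (ss c2 chi t) (psi t) (uu dpsi t) (hdf c2 chi t) (hf c2 chi t * sd c2 chi t)
     (20 / dl ^ 2) be Hs Hhd Hhs2 Hbe) as HD.
  apply (alg_final _ (Zf c2 chi psi dpsi t) _ (ss c2 chi t) (pp t) dl chi); try lra.
  - unfold ss. replace (pp t * chi * dl) with (pp t * (chi * dl)) by ring.
    apply Rmult_le_compat_l; lra.
  - split; [lra|]. unfold pp. nra.
  - unfold Zf, Qf. unfold be in HD. exact HD.
Qed.

Definition KK := 20000.
Definition x0f chi dl := sqrt (1 - KK / (chi * dl ^ 5)).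

Lemma x0_facts chi dl : 0 < chi -> 0 < dl <= 1 -> 2 * KK <= chi * dl ^ 5 ->
  7/10 <= x0f chi dl < 1 /\ pp (x0f chi dl) = KK / (chi * dl ^ 5) /\
  KK / (chi * dl ^ 5) <= 1/2 /\ KK / (chi * dl ^ 5) / 2 <= 1 - x0f chi dl.
Proof.
  intros Hchi Hdl HL. unfold KK in *.
  assert (Hc5 : 0 < chi * dl ^ 5) by lra.
  set (p0 := 20000 / (chi * dl ^ 5)).
  assert (Hp0 : 0 < p0 <= 1/2).
  { unfold p0. split. apply Rdiv_lt_0_compat; lra.
    apply Rmult_le_reg_r with (chi * dl ^ 5); [lra|]. unfold Rdiv. rewrite Rmult_assoc, Rinv_l; lra. }
  unfold x0f, KK. fold p0.
  assert (Hsq : sqrt (1 - p0) * sqrt (1 - p0) = 1 - p0) by (apply sqrt_sqrt; lra).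
  assert (Hs0 : 0 <= sqrt (1 - p0)) by apply sqrt_pos.
  assert (Hs1 : sqrt (1 - p0) < 1) by nra.
  split; [split|split; [|split]].
  - destruct (Rle_lt_dec (7/10) (sqrt (1 - p0))) as [|Hlt]; [auto|].
    assert (sqrt (1 - p0) * sqrt (1 - p0) < 7/10 * (7/10)) by (apply Rmult_le_0_lt_compat; lra). lra.
  - exact Hs1.
  - unfold pp. replace (sqrt (1 - p0) ^ 2) with (sqrt (1 - p0) * sqrt (1 - p0)) by ring. rewrite Hsq. ring.
  - lra.
  - assert (0 <= (1 - sqrt (1 - p0)) * (1 - sqrt (1 - p0))) by (apply Rmult_le_pos; lra).
    lra.
Qed.

Lemma pp_ge_p0 chi dl t : 0 < chi -> 0 < dl <= 1 -> 2 * KK <= chi * dl ^ 5 ->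
  0 <= t <= x0f chi dl -> KK / (chi * dl ^ 5) <= pp t /\ KK <= chi * pp t * dl ^ 5.
Proof.
  intros Hchi Hdl HL Ht. destruct (x0_facts chi dl Hchi Hdl HL) as [Hx [Hpx [Hp0 _]]].
  assert (pp (x0f chi dl) <= pp t) by (unfold pp; nra).
  split. lra. rewrite Hpx in H.
  assert (Hc5 : 0 < chi * dl ^ 5) by (unfold KK in HL; lra).
  replace (chi * pp t * dl ^ 5) with (pp t * (chi * dl ^ 5)) by ring.
  replace KK with (KK / (chi * dl ^ 5) * (chi * dl ^ 5)) at 1 by (field; lra).
  apply Rmult_le_compat_r; lra.
Qed.

Lemma DPhi A t : t < 1 ->
  derivable_pt_lim (fun t => 2 * A / sqrt (1 - t)) t (A / ((1 - t) * sqrt (1 - t))).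
Proof.
  intros Ht. assert (Hq : 0 < sqrt (1 - t)) by (apply sqrt_lt_R0; lra).
  assert (Hqq : sqrt (1 - t) * sqrt (1 - t) = 1 - t) by (apply sqrt_sqrt; lra).
  eapply D_eq. apply D_div. apply D_const. apply D_sqrt. apply D_minus. apply D_const. apply D_id. lra.
  lra. cbv beta. rewrite Hqq. field. split; lra.
Qed.

Lemma Yprime_bound c2 chi dl psi dpsi t : 0 < chi -> 0 < dl <= 1 -> c2 = chi * (1 - dl) ->
  2 * KK <= chi * dl ^ 5 -> 0 <= t <= x0f chi dl ->
  Rabs (psi t * uu dpsi t * (hdf c2 chi t * Qf c2 chi psi dpsi t
        - hf c2 chi t * sd c2 chi t * uu dpsi t ^ 2 / ss c2 chi t ^ 2))
  <= 24 / sqrt (chi * dl ^ 5) / ((1 - t) * sqrt (1 - t)) * Yf c2 chi psi dpsi t.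
Proof.
  intros Hchi Hdl Hc2 HL Ht.
  destruct (x0_facts chi dl Hchi Hdl HL) as [Hx _].
  destruct (pp_ge_p0 chi dl t Hchi Hdl HL Ht) as [_ HK].
  assert (HK64 : 64 <= chi * pp t * dl ^ 5) by (unfold KK in HK; lra).
  assert (Ht' : 0 <= t < 1) by lra.
  pose proof (Yder c2 chi dl psi dpsi t Hchi Hdl Hc2 Ht' HK64) as HD.
  destruct (Ycmp c2 chi dl psi dpsi t Hchi Hdl Hc2 Ht' HK64) as [HZ [HY1 _]].
  set (D := psi t * uu dpsi t * (hdf c2 chi t * Qf c2 chi psi dpsi t
        - hf c2 chi t * sd c2 chi t * uu dpsi t ^ 2 / ss c2 chi t ^ 2)) in *.
  set (Y := Yf c2 chi psi dpsi t) in *.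
  assert (Hc5 : 0 < chi * dl ^ 5) by (unfold KK in HL; lra).
  assert (Hsq5 : sqrt (chi * dl ^ 5) * sqrt (chi * dl ^ 5) = chi * dl ^ 5) by (apply sqrt_sqrt; lra).
  assert (Hsq5p : 0 < sqrt (chi * dl ^ 5)) by (apply sqrt_lt_R0; lra).
  assert (Hq : 0 < sqrt (1 - t)) by (apply sqrt_lt_R0; lra).
  assert (Hqq : sqrt (1 - t) * sqrt (1 - t) = 1 - t) by (apply sqrt_sqrt; lra).
  assert (HY0 : 0 <= Y) by lra.
  apply abs_le_of_sq.
  - apply Rmult_le_pos; [|lra]. apply Rdiv_le_0_compat. apply Rdiv_le_0_compat; lra.
    apply Rmult_lt_0_compat; lra.
  - replace ((24 / sqrt (chi * dl ^ 5) / ((1 - t) * sqrt (1 - t)) * Y) ^ 2)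
      with (576 * Y ^ 2 / ((1 - t) ^ 3 * (chi * dl ^ 5))).
    + apply Rmult_le_reg_r with ((1 - t) ^ 3 * (chi * dl ^ 5)).
      apply Rmult_lt_0_compat; [apply pow_lt; lra|lra].
      unfold Rdiv. rewrite Rmult_assoc, Rinv_l. lra.
      apply Rgt_not_eq. apply Rmult_lt_0_compat; [apply pow_lt; lra|lra].
    + set (q5 := sqrt (chi * dl ^ 5)) in *. set (q := sqrt (1 - t)) in *.
      rewrite <- Hsq5. replace ((1 - t) ^ 3) with ((1 - t) * (q * q) * (1 - t))
        by (rewrite Hqq; ring).
      field. split; lra.
Qed.

Lemma Ymono c2 chi dl psi dpsi d2psi a b : ODEH c2 chi psi dpsi d2psi ->
  0 < chi -> 0 < dl <= 1 -> c2 = chi * (1 - dl) ->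
  2 * KK <= chi * dl ^ 5 -> 0 <= a <= b -> b <= x0f chi dl ->
  Yf c2 chi psi dpsi b <= 2 * Yf c2 chi psi dpsi a /\ Yf c2 chi psi dpsi a <= 2 * Yf c2 chi psi dpsi b.
Proof.
  intros H Hchi Hdl Hc2 HL Hab Hb.
  destruct (x0_facts chi dl Hchi Hdl HL) as [Hx [_ [_ Hx1]]].
  assert (Hc5 : 0 < chi * dl ^ 5) by (unfold KK in HL; lra).
  assert (Hc : 0 <= c2 < chi) by (subst; split; nra).
  set (A := 24 / sqrt (chi * dl ^ 5)).
  assert (HA : 0 < A) by (unfold A; apply Rdiv_lt_0_compat; [lra|apply sqrt_lt_R0; lra]).
  set (Phi := fun t => 2 * A / sqrt (1 - t)).
  set (k := fun t => A / ((1 - t) * sqrt (1 - t))).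
  assert (HPmono : forall u v, u <= v < 1 -> Phi u <= Phi v).
  { intros u v Huv. unfold Phi. unfold Rdiv. apply Rmult_le_compat_l; [lra|].
    apply Rinv_le_contravar. apply sqrt_lt_R0; lra. apply sqrt_le_1_alt. lra. }
  assert (HPx0 : Phi (x0f chi dl) <= 1/2).
  { unfold Phi. set (x0 := x0f chi dl) in *.
    assert (Hq : 0 < sqrt (1 - x0)) by (apply sqrt_lt_R0; lra).
    assert (4 * A <= sqrt (1 - x0)).
    { assert (HAA : A * A = 576 / (chi * dl ^ 5)).
      { unfold A. unfold Rdiv. rewrite !Rmult_assoc. rewrite (Rmult_comm (/ sqrt _)).
        rewrite Rmult_assoc, <- Rinv_mult, sqrt_sqrt by lra. field. lra. }
      assert (16 * (A * A) <= 1 - x0).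
      { rewrite HAA. eapply Rle_trans; [|exact Hx1]. unfold KK.
        apply Rmult_le_reg_r with (chi * dl ^ 5); [lra|]. unfold Rdiv.
        replace (16 * (576 * / (chi * dl ^ 5)) * (chi * dl ^ 5)) with 9216 by (field; lra).
        replace (20000 * / (chi * dl ^ 5) * / 2 * (chi * dl ^ 5)) with 10000 by (field; lra). lra. }
      destruct (Rle_lt_dec (4 * A) (sqrt (1 - x0))) as [|Hlt]; auto.
      assert (sqrt (1 - x0) * sqrt (1 - x0) < 4 * A * (4 * A)) by (apply Rmult_le_0_lt_compat; lra).
      rewrite sqrt_sqrt in H1 by lra. lra. }
    apply Rmult_le_reg_r with (sqrt (1 - x0)); [lra|]. unfold Rdiv.
    rewrite Rmult_assoc, Rinv_l by lra. lra. }
  assert (HPpos : forall t, t < 1 -> 0 <= Phi t).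
  { intros t Ht. unfold Phi. apply Rdiv_le_0_compat; [lra|apply sqrt_lt_R0; lra]. }
  assert (HKb : forall t, a <= t <= b -> 0 <= Phi t - Phi a <= 1/2).
  { intros t Ht. split. pose proof (HPmono a t ltac:(lra)). lra.
    pose proof (HPmono t (x0f chi dl) ltac:(lra)). pose proof (HPpos a ltac:(lra)). lra. }
  assert (HY : forall t, a <= t <= b -> 0 <= Yf c2 chi psi dpsi t /\
     Rabs (psi t * uu dpsi t * (hdf c2 chi t * Qf c2 chi psi dpsi t
        - hf c2 chi t * sd c2 chi t * uu dpsi t ^ 2 / ss c2 chi t ^ 2)) <= k t * Yf c2 chi psi dpsi t).
  { intros t Ht. destruct (pp_ge_p0 chi dl t Hchi Hdl HL ltac:(lra)) as [_ HK].
    assert (HK64 : 64 <= chi * pp t * dl ^ 5) by (unfold KK in HK; lra).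
    destruct (Ycmp c2 chi dl psi dpsi t Hchi Hdl Hc2 ltac:(lra) HK64) as [HZ [HY1 _]].
    split. lra. apply (Yprime_bound c2 chi dl psi dpsi t Hchi Hdl Hc2 HL). lra. }
  assert (Hk0 : forall t, t < 1 -> 0 <= k t).
  { intros t Ht. unfold k. apply Rdiv_le_0_compat; [lra|]. apply Rmult_lt_0_compat; [lra|apply sqrt_lt_R0; lra]. }
  assert (HDg : forall t, t < 1 -> derivable_pt_lim (fun t => 1 + Phi a - Phi t) t (- k t)).
  { intros t Ht. eapply D_eq. apply D_minus. apply D_const. apply (DPhi A t Ht). unfold k. ring. }
  set (Y := Yf c2 chi psi dpsi).
  set (Y' := fun t => psi t * uu dpsi t * (hdf c2 chi t * Qf c2 chi psi dpsi t
        - hf c2 chi t * sd c2 chi t * uu dpsi t ^ 2 / ss c2 chi t ^ 2)).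
  assert (HDY : forall t, a <= t <= b -> derivable_pt_lim Y t (Y' t)).
  { intros t Ht. apply (DY c2 chi psi dpsi d2psi t H). lra. exact Hc. }
  split.
  - assert (F : Y b * (1 + Phi a - Phi b) <= Y a * (1 + Phi a - Phi a)).
    { apply (mono_down (fun t => Y t * (1 + Phi a - Phi t))
        (fun t => Y' t * (1 + Phi a - Phi t) + Y t * (- k t))); try lra.
      - intros t Ht. eapply D_eq. apply D_mult. apply HDY; lra. apply HDg; lra. reflexivity.
      - intros t Ht. destruct (HY t Ht) as [HY0 HYd]. apply Rabs_le_inv in HYd.
        pose proof (HKb t Ht). pose proof (Hk0 t ltac:(lra)).
        assert (Y' t * (1 + Phi a - Phi t) <= k t * Y t * (1 + Phi a - Phi t)) by
          (apply Rmult_le_compat_r; [lra|]; unfold Y', Y; lra).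
        assert (k t * Y t * (1 + Phi a - Phi t) <= k t * Y t).
        { rewrite <- (Rmult_1_r (k t * Y t)) at 2. apply Rmult_le_compat_l.
          apply Rmult_le_pos; unfold Y; lra. lra. }
        unfold Y in *. lra. }
    pose proof (HKb b ltac:(lra)). assert (0 <= Y b) by (apply HY; lra).
    assert (Y b * (1/2) <= Y b * (1 + Phi a - Phi b)) by (apply Rmult_le_compat_l; lra).
    unfold Y in *. lra.
  - assert (F : Y a / (1 + Phi a - Phi a) <= Y b / (1 + Phi a - Phi b)).
    { apply (mono_up (fun t => Y t / (1 + Phi a - Phi t))
        (fun t => (Y' t * (1 + Phi a - Phi t) - (- k t) * Y t) / ((1 + Phi a - Phi t) * (1 + Phi a - Phi t)))); try lra.
      - intros t Ht. pose proof (HKb t Ht). apply (D_div Y (fun t => 1 + Phi a - Phi t)). apply HDY; lra. apply HDg; lra. lra.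
      - intros t Ht. destruct (HY t Ht) as [HY0 HYd]. apply Rabs_le_inv in HYd.
        pose proof (HKb t Ht). pose proof (Hk0 t ltac:(lra)).
        apply Rdiv_le_0_compat; [|apply Rmult_lt_0_compat; lra].
        assert (- (k t * Y t) * (1 + Phi a - Phi t) <= Y' t * (1 + Phi a - Phi t)) by
          (apply Rmult_le_compat_r; [lra|]; unfold Y', Y; lra).
        assert (k t * Y t * (1 + Phi a - Phi t) <= k t * Y t).
        { rewrite <- (Rmult_1_r (k t * Y t)) at 2. apply Rmult_le_compat_l.
          apply Rmult_le_pos; unfold Y; lra. lra. }
        unfold Y in *. lra. }
    pose proof (HKb b ltac:(lra)). assert (0 <= Y b) by (apply HY; lra).
    replace (1 + Phi a - Phi a) with 1 in F by ring. unfold Rdiv in F at 1. rewrite Rinv_1, Rmult_1_r in F.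
    assert (Y b / (1 + Phi a - Phi b) <= 2 * Y b).
    { apply Rmult_le_reg_r with (1 + Phi a - Phi b); [lra|]. unfold Rdiv.
      rewrite Rmult_assoc, Rinv_l by lra. assert (Y b * 1 <= 2 * Y b * (1 + Phi a - Phi b)) by nra. lra. }
    unfold Y in *. lra.
Qed.

Lemma Zcomp c2 chi dl psi dpsi d2psi t1 t2 : ODEH c2 chi psi dpsi d2psi ->
  0 < chi -> 0 < dl <= 1 -> c2 = chi * (1 - dl) -> 2 * KK <= chi * dl ^ 5 ->
  0 <= t1 <= x0f chi dl -> 0 <= t2 <= x0f chi dl ->
  Zf c2 chi psi dpsi t1 <= 10 / 3 * Zf c2 chi psi dpsi t2.
Proof.
  intros H Hchi Hdl Hc2 HL H1 H2.
  destruct (x0_facts chi dl Hchi Hdl HL) as [Hx _].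
  assert (C1 : forall t, 0 <= t <= x0f chi dl -> 0 <= Zf c2 chi psi dpsi t /\
     3 / 4 * Zf c2 chi psi dpsi t <= Yf c2 chi psi dpsi t <= 5 / 4 * Zf c2 chi psi dpsi t).
  { intros t Ht. destruct (pp_ge_p0 chi dl t Hchi Hdl HL Ht) as [_ HK].
    apply (Ycmp c2 chi dl psi dpsi t Hchi Hdl Hc2). lra. unfold KK in HK; lra. }
  assert (Y12 : Yf c2 chi psi dpsi t1 <= 2 * Yf c2 chi psi dpsi t2).
  { destruct (Rle_lt_dec t1 t2).
    - apply (Ymono c2 chi dl psi dpsi d2psi t1 t2 H Hchi Hdl Hc2 HL); lra.
    - apply (Ymono c2 chi dl psi dpsi d2psi t2 t1 H Hchi Hdl Hc2 HL); lra. }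
  destruct (C1 t1 H1) as [_ [A1 _]]. destruct (C1 t2 H2) as [_ [_ A2]]. lra.
Qed.

Lemma Zbound c2 chi dl psi dpsi d2psi P t : ODEH c2 chi psi dpsi d2psi ->
  0 < chi -> 0 < dl <= 1 -> c2 = chi * (1 - dl) -> 2 * KK <= chi * dl ^ 5 ->
  (forall x, -1 <= x <= 1 -> derivable_pt_lim P x (psi x ^ 2)) -> P (-1) = 0 -> P 1 = 1 ->
  0 <= t <= x0f chi dl -> Zf c2 chi psi dpsi t <= 40 * chi / dl.
Proof.
  intros H Hchi Hdl Hc2 HL HP HP0 HP1 Ht.
  destruct (x0_facts chi dl Hchi Hdl HL) as [Hx _].
  set (x0 := x0f chi dl) in *.
  assert (Hc : 0 <= c2 < chi) by (subst; split; nra).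
  assert (Hdl5 : dl ^ 5 <= dl).
  { replace (dl^5) with (dl * dl^4) by ring. pose proof (pow_le1 dl 4 ltac:(lra)).
    assert (dl * dl^4 <= dl * 1) by (apply Rmult_le_compat_l; lra). lra. }
  assert (Hcd : 40000 <= chi * dl).
  { unfold KK in HL. assert (chi * dl ^ 5 <= chi * dl) by (apply Rmult_le_compat_l; lra). lra. }
  assert (HZc := fun t2 H2 => Zcomp c2 chi dl psi dpsi d2psi t t2 H Hchi Hdl Hc2 HL Ht H2).
  assert (HZc' := fun t2 H2 => Zcomp c2 chi dl psi dpsi d2psi t2 t H Hchi Hdl Hc2 HL H2 Ht).
  set (Zt := Zf c2 chi psi dpsi t) in *.
  assert (HZ0 : forall t, 0 <= t <= x0 -> 0 <= Zf c2 chi psi dpsi t).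
  { intros t' Ht'. destruct (pp_ge_p0 chi dl t' Hchi Hdl HL Ht') as [_ HK].
    apply (Ycmp c2 chi dl psi dpsi t' Hchi Hdl Hc2). lra. unfold KK in HK; lra. }
  assert (HZt : 0 <= Zt) by (apply HZ0; lra).
  set (w := sqrt Zt). assert (Hw : w * w = Zt) by (apply sqrt_sqrt; lra).
  assert (Hw0 : 0 <= w) by apply sqrt_pos.
  set (v := sqrt (3 / 10 * (chi * dl))).
  assert (Hv : v * v = 3 / 10 * (chi * dl)) by (apply sqrt_sqrt; lra).
  assert (Hv0 : 0 <= v) by apply sqrt_pos.
  assert (Hv100 : 100 <= v).
  { destruct (Rle_lt_dec 100 v); auto. assert (v * v < 100 * 100) by (apply Rmult_le_0_lt_compat; lra). lra. }
  assert (Hpt : forall y, 0 <= y <= x0 ->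
     0 < pp y <= 1 /\ 0 < ss c2 chi y /\ chi * dl <= rr c2 chi y <= chi).
  { intros y Hy. destruct (bnds c2 chi dl y Hchi Hdl Hc2 ltac:(lra)) as [Hr _].
    assert (0 < pp y <= 1) by (unfold pp; nra). split; auto. split; auto.
    unfold ss. apply Rmult_lt_0_compat; lra. }
  assert (Hpu : forall y, 0 <= y <= x0 -> Rabs (psi y * uu dpsi y) <= w).
  { intros y Hy. destruct (Hpt y Hy) as [Hp [Hs Hr]].
    pose proof (alg_psU (ss c2 chi y) (psi y) (uu dpsi y) Hs) as Hq.
    change (ss c2 chi y * (psi y ^ 2 + uu dpsi y ^ 2 / ss c2 chi y) ^ 2) with (Zf c2 chi psi dpsi y) in Hq.
    pose proof (HZc' y Hy). apply abs_le_of_sq; [lra|]. nra. }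
  set (kap := v * w).
  assert (HG : 2 * chi * P 0 + psi 0 * uu dpsi 0 - kap * 0 <= 2 * chi * P x0 + psi x0 * uu dpsi x0 - kap * x0).
  { apply (mono_up (fun y => 2 * chi * P y + psi y * uu dpsi y - kap * y)
        (fun y => 2 * chi * (psi y ^ 2) + (dpsi y * uu dpsi y - rr c2 chi y * psi y ^ 2) - kap)); try lra.
    - intros y Hy. eapply D_eq. apply D_minus. apply D_plus. apply D_mult. apply D_const. apply HP; lra.
      apply (Dpu c2 chi psi dpsi d2psi y H). lra. apply D_mult. apply D_const. apply D_id.
      cbv beta. ring.
    - intros y Hy. destruct (Hpt y Hy) as [Hp [Hs Hr]].
      set (Q := Qf c2 chi psi dpsi y).
      assert (HrQ : rr c2 chi y * Q = rr c2 chi y * psi y ^ 2 + dpsi y * uu dpsi y).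
      { unfold Q, Qf, uu, ss. field. split; lra. }
      assert (HQ0 : 0 <= Q).
      { unfold Q, Qf. assert (0 <= uu dpsi y ^ 2 / ss c2 chi y) by (apply Rdiv_le_0_compat; [apply pow2_ge_0|lra]).
        pose proof (pow2_ge_0 (psi y)). lra. }
      assert (HZy : Zf c2 chi psi dpsi y = ss c2 chi y * Q ^ 2) by reflexivity.
      assert (Hk : kap <= rr c2 chi y * Q).
      { apply Rsqr_incr_0_var. 2: apply Rmult_le_pos; lra.
        unfold Rsqr. unfold kap.
        replace (v * w * (v * w)) with ((v * v) * (w * w)) by ring. rewrite Hv, Hw.
        pose proof (HZc y Hy) as Hzc. fold Zt in Hzc.
        assert (E1 : 3 / 10 * (chi * dl) * Zt <= chi * dl * Zf c2 chi psi dpsi y).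
        { assert (0 <= chi * dl) by lra.
          replace (3 / 10 * (chi * dl) * Zt) with ((chi * dl) * (3 / 10 * Zt)) by ring.
          apply Rmult_le_compat_l; lra. }
        eapply Rle_trans; [exact E1|]. rewrite HZy. unfold ss.
        replace (rr c2 chi y * Q * (rr c2 chi y * Q)) with (rr c2 chi y * (rr c2 chi y * Q ^ 2)) by ring.
        replace (chi * dl * (pp y * rr c2 chi y * Q ^ 2)) with (chi * dl * pp y * (rr c2 chi y * Q ^ 2)) by ring.
        apply Rmult_le_compat_r. assert (0 <= Q^2) by apply pow2_ge_0. nra.
        assert (chi * dl * pp y <= chi * dl) by (rewrite <- (Rmult_1_r (chi*dl)) at 2; apply Rmult_le_compat_l; lra).
        lra. }
      pose proof (pow2_ge_0 (psi y)).
      assert (rr c2 chi y * psi y ^ 2 <= chi * psi y ^ 2) by (apply Rmult_le_compat_r; lra).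
      lra. }
  pose proof (P_diff psi P 0 x0 HP HP0 HP1 ltac:(lra) ltac:(lra)) as HPd.
  pose proof (Hpu 0 ltac:(lra)) as Hu0. pose proof (Hpu x0 ltac:(lra)) as Hux.
  apply Rabs_le_inv in Hu0. apply Rabs_le_inv in Hux.
  assert (Hk1 : kap * x0 <= 2 * chi + 2 * w).
  { assert (2 * chi * (P x0 - P 0) <= 2 * chi * 1) by (apply Rmult_le_compat_l; lra).
    lra. }
  assert (Hk2 : 68 / 100 * v * w <= 2 * chi).
  { unfold kap in Hk1. assert (v * w * (7/10) <= v * w * x0) by (apply Rmult_le_compat_l; [apply Rmult_le_pos|]; lra).
    assert (2 * w <= 2 / 100 * v * w) by (assert (100 * w <= v * w) by (apply Rmult_le_compat_r; lra); lra).
    lra. }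
  assert (Hk3 : (68 / 100) ^ 2 * (v * v) * (w * w) <= 4 * chi ^ 2).
  { replace ((68 / 100) ^ 2 * (v * v) * (w * w)) with ((68 / 100 * v * w) ^ 2) by ring.
    replace (4 * chi ^ 2) with ((2 * chi) ^ 2) by ring. apply pow_incr. split; [|lra].
    apply Rmult_le_pos; [apply Rmult_le_pos|]; lra. }
  rewrite Hv, Hw in Hk3.
  apply Rmult_le_reg_r with ((68 / 100) ^ 2 * (3 / 10 * (chi * dl))). nra.
  replace (40 * chi / dl * ((68 / 100) ^ 2 * (3 / 10 * (chi * dl)))) with (40 * (68/100)^2 * (3/10) * chi ^ 2) by (field; lra).
  nra.
Qed.

Lemma endpoint c2 chi psi dpsi d2psi x1 : ODEH c2 chi psi dpsi d2psi -> 0 <= c2 <= chi -> 0 < chi ->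
  (forall x, -1 <= x <= 1 -> continuity_pt psi x) ->
  0 <= x1 < 1 -> 2 * chi * (1 - x1) <= 1/2 ->
  forall y, x1 <= y <= 1 -> Rabs (psi y) <= 2 * Rabs (psi x1).
Proof.
  intros H Hc Hchi Hcont Hx1 Hcx y Hy.
  destruct (continuity_ab_maj (fun x => Rabs (psi x)) x1 1) as [m1 [Hm1 Hm1b]]; [lra| |].
  { intros x Hx. apply (continuity_pt_locally_ext (comp Rabs psi) _ 1). lra. intros; reflexivity.
    apply continuity_pt_comp. apply Hcont; lra. apply Rcontinuity_abs. }
  set (M1 := Rabs (psi m1)) in *.
  assert (HM1 : forall z, x1 <= z <= 1 -> Rabs (psi z) <= M1) by (intros; apply Hm1; auto).
  assert (HM10 : 0 <= M1) by apply Rabs_pos.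
  assert (L : Rabs (psi m1 - psi x1) <= 2 * chi * M1 * (m1 - x1)).
  { apply (lip psi dpsi); try lra.
    - intros t Ht. apply (Dpsi _ _ _ _ _ _ H). lra.
    - intros t Ht. apply (dpsi_bound _ _ _ _ _ t M1 H Hc Hchi). lra. intros; apply HM1; lra.
    - intros t Ht. apply Hcont. lra. }
  assert (2 * chi * M1 * (m1 - x1) <= M1 / 2).
  { assert (2 * chi * M1 * (m1 - x1) <= 2 * chi * M1 * (1 - x1)) by
      (apply Rmult_le_compat_l; [apply Rmult_le_pos|]; lra).
    assert (2 * chi * M1 * (1 - x1) = M1 * (2 * chi * (1 - x1))) by ring.
    assert (M1 * (2 * chi * (1 - x1)) <= M1 * (1/2)) by (apply Rmult_le_compat_l; lra). lra. }
  pose proof (Rabs_triang_inv (psi m1) (psi x1)). fold M1 in H1.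
  pose proof (HM1 y Hy). lra.
Qed.

Lemma large_case c2 chi dl psi dpsi d2psi P : ODEH c2 chi psi dpsi d2psi ->
  0 < chi -> 0 < dl <= 1 -> c2 = chi * (1 - dl) -> 2 * KK <= chi * dl ^ 5 ->
  (forall x, -1 <= x <= 1 -> continuity_pt psi x) ->
  (forall x, -1 <= x <= 1 -> derivable_pt_lim P x (psi x ^ 2)) -> P (-1) = 0 -> P 1 = 1 ->
  forall y, 0 <= y <= 1 ->
  psi y ^ 4 <= 10240 * KK * chi / dl ^ 8 /\ pp y * psi y ^ 4 <= 10240 * KK ^ 2 / dl ^ 13.
Proof.
  intros H Hchi Hdl Hc2 HL Hcont HP HP0 HP1 y Hy.
  destruct (x0_facts chi dl Hchi Hdl HL) as [Hx [Hpx0 [Hp0 Hx1]]].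
  set (x0 := x0f chi dl) in *.
  set (p0 := KK / (chi * dl ^ 5)) in *.
  assert (Hc : 0 <= c2 < chi) by (subst; split; nra).
  assert (Hc5 : 0 < chi * dl ^ 5) by (unfold KK in HL; lra).
  assert (Hdl5 : dl ^ 5 <= 1) by (apply pow_le1; lra).
  assert (Hd8 : 0 < dl ^ 8) by (apply pow_lt; lra).
  assert (HKK : KK = 20000) by reflexivity.
  assert (Hchi2 : 2 * KK <= chi) by (assert (chi * dl^5 <= chi * 1) by (apply Rmult_le_compat_l; lra); lra).
  assert (Hpt : forall z, 0 <= z < 1 ->
     0 < pp z <= 1 /\ chi * dl <= rr c2 chi z <= chi /\ 0 < ss c2 chi z /\ sd c2 chi z <= 0).
  { intros z Hz. destruct (bnds c2 chi dl z Hchi Hdl Hc2 Hz) as [Hr [Hsd _]].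
    assert (0 < pp z <= 1) by (unfold pp; nra). repeat split; try lra.
    unfold ss. apply Rmult_lt_0_compat; lra. }
  assert (Hb1 : 40 * chi / KK <= 10240 * KK * chi / dl ^ 8).
  { rewrite HKK. apply Rle_trans with (10240 * 20000 * chi); [|].
    - unfold Rdiv. assert (/ 20000 <= 10240 * 20000) by (apply Rmult_le_reg_r with 20000; [lra|]; rewrite Rinv_l; lra). nra.
    - unfold Rdiv. rewrite <- (Rmult_1_r (10240 * 20000 * chi)) at 1. apply Rmult_le_compat_l. lra.
      rewrite <- Rinv_1. apply Rinv_le_contravar. lra. apply pow_le1; lra. }
  assert (Hb2 : 40 / dl ^ 2 <= 10240 * KK ^ 2 / dl ^ 13).
  { rewrite HKK. unfold Rdiv. assert (0 < dl^2) by (apply pow_lt; lra).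
    assert (/ dl ^ 2 <= / dl ^ 13).
    { apply Rinv_le_contravar. apply pow_lt; lra.
      replace (dl^13) with (dl^2 * dl^11) by ring. pose proof (pow_le1 dl 11 ltac:(lra)).
      assert (0 <= dl^11) by (apply pow_le; lra).
      assert (dl^2 * dl^11 <= dl^2 * 1) by (apply Rmult_le_compat_l; lra). lra. }
    assert (0 < / dl ^ 13) by (apply Rinv_0_lt_compat; apply pow_lt; lra). nra. }
  destruct (Rle_lt_dec y x0) as [Hyx|Hyx].
  -
    pose proof (Zbound c2 chi dl psi dpsi d2psi P y H Hchi Hdl Hc2 HL HP HP0 HP1 (conj (proj1 Hy) Hyx)) as HZ.
    destruct (Hpt y ltac:(lra)) as [Hp [Hr [Hs _]]].
    destruct (pp_ge_p0 chi dl y Hchi Hdl HL (conj (proj1 Hy) Hyx)) as [Hpp _]. fold p0 in Hpp.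
    assert (HZs : ss c2 chi y * psi y ^ 4 <= 40 * chi / dl).
    { eapply Rle_trans; [|exact HZ]. unfold Zf, Qf.
      assert (0 <= uu dpsi y ^ 2 / ss c2 chi y) by (apply Rdiv_le_0_compat; [apply pow2_ge_0|lra]).
      assert (psi y ^ 4 <= (psi y ^ 2 + uu dpsi y ^ 2 / ss c2 chi y) ^ 2).
      { replace (psi y ^ 4) with ((psi y ^ 2) ^ 2) by ring. apply pow_incr.
        pose proof (pow2_ge_0 (psi y)). lra. }
      apply Rmult_le_compat_l; lra. }
    assert (H4 : 0 <= psi y ^ 4) by (replace (psi y ^ 4) with ((psi y ^ 2) ^ 2) by ring; apply pow2_ge_0).
    unfold ss in HZs. split.
    + assert (Hs0 : KK / dl ^ 4 <= pp y * rr c2 chi y).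
      { apply Rle_trans with (p0 * (chi * dl)). unfold p0. right. field. split; lra.
        apply Rmult_le_compat; try lra; try (unfold p0; apply Rdiv_le_0_compat; [unfold KK; lra|lra]);
        try (apply Rmult_le_pos; lra). }
      assert (KK / dl ^ 4 * psi y ^ 4 <= 40 * chi / dl) by
        (eapply Rle_trans; [|exact HZs]; apply Rmult_le_compat_r; lra).
      assert (psi y ^ 4 <= 40 * chi * dl ^ 3 / KK).
      { apply Rmult_le_reg_l with (KK / dl ^ 4). apply Rdiv_lt_0_compat. rewrite HKK; lra. apply pow_lt; lra.
        eapply Rle_trans; [exact H0|]. right. field. split. rewrite HKK; lra. lra. }
      assert (40 * chi * dl ^ 3 / KK <= 40 * chi / KK).
      { unfold Rdiv. apply Rmult_le_compat_r. rewrite HKK; lra.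
        pose proof (pow_le1 dl 3 ltac:(lra)). assert (40 * chi * dl^3 <= 40 * chi * 1) by (apply Rmult_le_compat_l; lra). lra. }
      lra.
    + assert (pp y * psi y ^ 4 * (chi * dl) <= 40 * chi / dl).
      { eapply Rle_trans; [|exact HZs]. replace (pp y * rr c2 chi y * psi y ^ 4) with
          (pp y * psi y ^ 4 * rr c2 chi y) by ring. apply Rmult_le_compat_l; [apply Rmult_le_pos|]; lra. }
      assert (pp y * psi y ^ 4 <= 40 / dl ^ 2).
      { apply Rmult_le_reg_r with (chi * dl). nra. eapply Rle_trans; [exact H0|]. right. field. lra. }
      lra.
  -
    set (x1 := 1 - 1 / (4 * chi)).
    assert (Hx1a : 0 < x1 < 1).
    { unfold x1. split. assert (1 / (4 * chi) < 1).
      { apply Rmult_lt_reg_r with (4 * chi); [lra|]. unfold Rdiv. rewrite Rmult_assoc, Rinv_l by lra.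
        rewrite HKK in Hchi2. lra. } lra.
      assert (0 < 1 / (4 * chi)) by (apply Rdiv_lt_0_compat; lra). lra. }
    assert (Hcx1 : 2 * chi * (1 - x1) = 1/2) by (unfold x1; field; lra).
    assert (Hx01 : x0 <= x1).
    { assert (1 / (4 * chi) <= p0 / 2).
      { unfold p0. apply Rmult_le_reg_r with (4 * chi * dl ^ 5). apply Rmult_lt_0_compat; [lra|apply pow_lt; lra].
        replace (1 / (4 * chi) * (4 * chi * dl ^ 5)) with (dl ^ 5) by (field; lra).
        replace (KK / (chi * dl ^ 5) / 2 * (4 * chi * dl ^ 5)) with (2 * KK) by (field; lra).
        rewrite HKK. lra. }
      unfold x1. lra. }
    set (E0 := Ef c2 chi psi dpsi x0). set (s0 := ss c2 chi x0). set (s1 := ss c2 chi x1).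
    destruct (Hpt x0 ltac:(lra)) as [Hp0' [Hr0 [Hs0 _]]].
    destruct (Hpt x1 ltac:(lra)) as [Hp1' [Hr1 [Hs1 _]]].
    change (ss c2 chi x0) with s0 in Hs0. change (ss c2 chi x1) with s1 in Hs1.
    assert (HE0 : 0 <= E0).
    { unfold E0, Ef. assert (0 <= ss c2 chi x0 * psi x0 ^ 2) by (apply Rmult_le_pos; [left; exact Hs0|apply pow2_ge_0]).
      pose proof (pow2_ge_0 (uu dpsi x0)). lra. }
    assert (HE0sq : E0 ^ 2 = s0 * Zf c2 chi psi dpsi x0).
    { unfold E0, Ef, Zf, Qf. fold s0. field. lra. }
    assert (Hx0r : 0 <= x0 <= x0) by lra.
    pose proof (Zbound c2 chi dl psi dpsi d2psi P x0 H Hchi Hdl Hc2 HL HP HP0 HP1 Hx0r) as HZ0.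
    fold x0 in HZ0.
    assert (Hs0b : s0 <= KK / dl ^ 5).
    { unfold s0, ss. rewrite Hpx0.
      replace (KK / dl ^ 5) with (KK / (chi * dl ^ 5) * chi) by (field; lra).
      apply Rmult_le_compat_l. unfold KK. apply Rdiv_le_0_compat; lra. lra. }
    assert (Hs1b : dl / 4 <= s1).
    { unfold s1, ss. assert (1 / (4 * chi) <= pp x1).
      { unfold pp. replace (1 - x1 ^ 2) with ((1 - x1) * (1 + x1)) by ring.
        replace (1 - x1) with (1 / (4 * chi)) by (unfold x1; ring).
        assert (0 < 1 / (4 * chi)) by (apply Rdiv_lt_0_compat; lra).
        assert (1 / (4 * chi) * 1 <= 1 / (4 * chi) * (1 + x1)) by (apply Rmult_le_compat_l; lra). lra. }
      apply Rle_trans with (1 / (4 * chi) * (chi * dl)). right. field. lra.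
      apply Rmult_le_compat; try lra; try (left; apply Rdiv_lt_0_compat; lra); try (apply Rmult_le_pos; lra). }
    assert (Hmid : forall z, x0 <= z <= x1 -> psi z ^ 2 <= E0 / s1).
    { intros z Hz.
      assert (HEz : Ef c2 chi psi dpsi z <= E0).
      { unfold E0. apply (mono_down (Ef c2 chi psi dpsi) (fun t => sd c2 chi t * psi t ^ 2)); try lra.
        - intros t Ht. apply (DE c2 chi psi dpsi d2psi t H). lra.
        - intros t Ht. destruct (Hpt t ltac:(lra)) as [_ [_ [_ Hsd]]].
          apply prod_nonpos_r. lra. apply pow2_ge_0. }
      assert (Hsz : s1 <= ss c2 chi z).
      { unfold s1. apply (mono_down (ss c2 chi) (sd c2 chi)); try lra.
        - intros t Ht. apply Dss.
        - intros t Ht. destruct (Hpt t ltac:(lra)) as [_ [_ [_ Hsd]]]. lra. }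
      assert (ss c2 chi z * psi z ^ 2 <= E0).
      { eapply Rle_trans; [|exact HEz]. unfold Ef. pose proof (pow2_ge_0 (uu dpsi z)). lra. }
      apply Rmult_le_reg_r with s1; [lra|]. unfold Rdiv. rewrite Rmult_assoc, Rinv_l by lra.
      rewrite Rmult_1_r.
      assert (psi z ^ 2 * s1 <= psi z ^ 2 * ss c2 chi z) by (apply Rmult_le_compat_l; [apply pow2_ge_0|lra]).
      lra. }
    assert (Hy2 : psi y ^ 2 <= 4 * (E0 / s1)).
    { assert (0 <= E0 / s1) by (apply Rdiv_le_0_compat; lra).
      destruct (Rle_lt_dec y x1) as [Hyx1|Hyx1].
      - pose proof (Hmid y ltac:(lra)). lra.
      - pose proof (endpoint c2 chi psi dpsi d2psi x1 H ltac:(lra) Hchi Hcont ltac:(lra) ltac:(lra) y ltac:(lra)) as He.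
        pose proof (Hmid x1 ltac:(lra)).
        pose proof (sq_le_of_abs _ _ He). replace ((2 * Rabs (psi x1)) ^ 2) with (4 * psi x1 ^ 2) in H2
          by (rewrite <- (pow2_abs (psi x1)); ring). lra. }
    set (Z0 := Zf c2 chi psi dpsi x0) in *.
    assert (HZ0p : 0 <= Z0).
    { destruct (Rle_lt_dec 0 Z0); auto. assert (s0 * Z0 < 0) by (apply Rmult_pos_neg; lra).
      pose proof (pow2_ge_0 E0). lra. }
    assert (A1 : s0 * Z0 <= KK / dl ^ 5 * (40 * chi / dl)) by (apply Rmult_le_compat; lra).
    assert (A2 : / (s1 * s1) <= 16 / dl ^ 2).
    { replace (16 / dl ^ 2) with (/ (dl / 4 * (dl / 4))) by (field; lra).
      apply Rinv_le_contravar. apply Rmult_lt_0_compat; lra. apply Rmult_le_compat; lra. }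
    assert (Hy4 : psi y ^ 4 <= 10240 * KK * chi / dl ^ 8).
    { assert (B1 : psi y ^ 4 <= (4 * (E0 / s1)) ^ 2).
      { replace (psi y ^ 4) with ((psi y ^ 2) ^ 2) by ring. apply pow_incr. split; [apply pow2_ge_0|lra]. }
      assert (B2 : (4 * (E0 / s1)) ^ 2 = 16 * (s0 * Z0) * / (s1 * s1)).
      { rewrite <- HE0sq. field. lra. }
      assert (B3 : 16 * (s0 * Z0) * / (s1 * s1) <= 16 * (KK / dl ^ 5 * (40 * chi / dl)) * (16 / dl ^ 2)).
      { apply Rmult_le_compat; try lra. apply Rmult_le_pos; [lra|]. apply Rmult_le_pos; lra.
        left; apply Rinv_0_lt_compat; apply Rmult_lt_0_compat; lra. }
      assert (B4 : 16 * (KK / dl ^ 5 * (40 * chi / dl)) * (16 / dl ^ 2) = 10240 * KK * chi / dl ^ 8)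
        by (field; lra).
      lra. }
    split; [exact Hy4|].
    assert (Hppy : 0 <= pp y <= p0).
    { rewrite <- Hpx0. unfold pp. split; nra. }
    assert (H4 : 0 <= psi y ^ 4) by (replace (psi y ^ 4) with ((psi y ^ 2) ^ 2) by ring; apply pow2_ge_0).
    apply Rle_trans with (p0 * (10240 * KK * chi / dl ^ 8)).
    apply Rmult_le_compat; lra.
    right. unfold p0. field. split; lra.
Qed.

Lemma eps_cases n : (-1) ^ n = 1 \/ (-1) ^ n = -1.
Proof. induction n; simpl. left; ring. destruct IHn as [->| ->]; [right|left]; ring. Qed.

Lemma fourth_le a R : 0 <= a -> 0 <= R -> a ^ 4 <= R ^ 4 -> a <= R.
Proof. intros Ha HR H. destruct (Rle_lt_dec a R); auto.
  assert (R * R < a * a) by (apply Rmult_le_0_lt_compat; lra).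
  assert (0 <= R * R) by (apply Rmult_le_pos; lra).
  assert (R * R * (R * R) < a * a * (a * a)) by (apply Rmult_le_0_lt_compat; lra).
  replace (R ^ 4) with (R * R * (R * R)) in H by ring. replace (a ^ 4) with (a * a * (a * a)) in H by ring.
  lra. Qed.

Lemma sqsq4 z : 0 <= z -> sqrt (sqrt z) ^ 4 = z.
Proof. intros. replace (sqrt (sqrt z) ^ 4) with ((sqrt (sqrt z) * sqrt (sqrt z)) * (sqrt (sqrt z) * sqrt (sqrt z))) by ring.
  rewrite sqrt_sqrt by apply sqrt_pos. apply sqrt_sqrt; auto. Qed.

Lemma main_bounds c2 chi dl psi dpsi d2psi eps : ODEH c2 chi psi dpsi d2psi ->
  0 < chi -> 0 < dl <= 1 -> c2 = chi * (1 - dl) ->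
  (forall x, -1 <= x <= 1 -> continuity_pt psi x) ->
  (exists pr : Riemann_integrable (fun x => psi x ^ 2) (-1) 1, RiemannInt pr = 1) ->
  (eps = 1 \/ eps = -1) ->
  (forall x, -1 <= x <= 1 -> psi (- x) = eps * psi x) ->
  forall y, 0 <= y <= 1 ->
  psi y ^ 4 * dl ^ 16 <= 10000 ^ 4 * chi /\ pp y * psi y ^ 4 * dl ^ 16 <= 10000 ^ 4.
Proof.
  intros H Hchi Hdl Hc2 Hcont Hnorm He Hpar y Hy.
  assert (Hc : 0 <= c2 < chi) by (subst; split; nra).
  destruct (prim_exists psi Hcont Hnorm) as [P [HP [HP0 HP1]]].
  destruct (max_exists psi eps Hcont He Hpar) as [tm [Htm HM]].
  set (M := Rabs (psi tm)) in *.
  pose proof (M_lb psi P M HP HP0 HP1 HM) as HM2.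
  assert (HM0 : 0 < M).
  { assert (0 <= M) by apply Rabs_pos. destruct (Req_dec M 0) as [E|]; [|lra].
    rewrite E in HM2. lra. }
  pose proof (chi_lb c2 chi psi dpsi d2psi eps tm H Hc Hcont He Hpar Htm HM HM0) as Hchi4.
  assert (H4 : 0 <= psi y ^ 4) by (replace (psi y ^ 4) with ((psi y ^ 2) ^ 2) by ring; apply pow2_ge_0).
  assert (Hpy : 0 <= pp y <= 1) by (unfold pp; nra).
  assert (Hd16 : 0 < dl ^ 16) by (apply pow_lt; lra).
  destruct (Rle_lt_dec (2 * KK) (chi * dl ^ 5)) as [HL|HS].
  - destruct (large_case c2 chi dl psi dpsi d2psi P H Hchi Hdl Hc2 HL Hcont HP HP0 HP1 y Hy) as [B1 B2].
    split.
    + apply Rle_trans with (10240 * KK * chi / dl ^ 8 * dl ^ 16). apply Rmult_le_compat_r; lra.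
      replace (10240 * KK * chi / dl ^ 8 * dl ^ 16) with (10240 * KK * chi * dl ^ 8) by (field; lra).
      pose proof (pow_le1 dl 8 ltac:(lra)). assert (0 <= dl^8) by (apply pow_le; lra).
      unfold KK. nra.
    + apply Rle_trans with (10240 * KK ^ 2 / dl ^ 13 * dl ^ 16). apply Rmult_le_compat_r; lra.
      replace (10240 * KK ^ 2 / dl ^ 13 * dl ^ 16) with (10240 * KK ^ 2 * dl ^ 3) by (field; lra).
      pose proof (pow_le1 dl 3 ltac:(lra)). assert (0 <= dl^3) by (apply pow_le; lra).
      unfold KK. nra.
  - pose proof (M_ub_small c2 chi psi dpsi d2psi P tm H Hc Hcont HP HP0 HP1 Htm HM Hchi4) as HMs.
    fold M in HMs.
    assert (Hy4 : psi y ^ 4 <= 4096 * chi ^ 2).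
    { assert (Rabs (psi y) <= M) by (apply HM; lra).
      pose proof (sq_le_of_abs _ _ H0).
      replace (psi y ^ 4) with ((psi y ^ 2) ^ 2) by ring.
      replace (4096 * chi ^ 2) with ((64 * chi) ^ 2) by ring. apply pow_incr. split. apply pow2_ge_0. lra. }
    assert (Hd11 : dl ^ 16 <= dl ^ 5).
    { replace (dl ^ 16) with (dl ^ 5 * dl ^ 11) by ring. pose proof (pow_le1 dl 11 ltac:(lra)).
      assert (0 < dl ^ 5) by (apply pow_lt; lra).
      assert (dl ^ 5 * dl ^ 11 <= dl ^ 5 * 1) by (apply Rmult_le_compat_l; lra). lra. }
    assert (Hcd : chi * dl ^ 16 <= 40000) by (unfold KK in HS;
      assert (chi * dl ^ 16 <= chi * dl ^ 5) by (apply Rmult_le_compat_l; lra); lra).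
    assert (A1 : psi y ^ 4 * dl ^ 16 <= 4096 * chi ^ 2 * dl ^ 16) by (apply Rmult_le_compat_r; lra).
    split.
    + eapply Rle_trans; [exact A1|].
      replace (4096 * chi ^ 2 * dl ^ 16) with (4096 * chi * (chi * dl ^ 16)) by ring.
      assert (4096 * chi * (chi * dl ^ 16) <= 4096 * chi * 40000) by (apply Rmult_le_compat_l; lra).
      lra.
    + apply Rle_trans with (psi y ^ 4 * dl ^ 16).
      { replace (pp y * psi y ^ 4 * dl ^ 16) with (pp y * (psi y ^ 4 * dl ^ 16)) by ring.
        assert (0 <= psi y ^ 4 * dl ^ 16) by (apply Rmult_le_pos; lra).
        assert (pp y * (psi y ^ 4 * dl ^ 16) <= 1 * (psi y ^ 4 * dl ^ 16)) by (apply Rmult_le_compat_r; lra).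
        lra. }
      eapply Rle_trans; [exact A1|].
      assert (Hdd : dl ^ 16 <= dl ^ 10).
      { replace (dl ^ 16) with (dl ^ 10 * dl ^ 6) by ring. pose proof (pow_le1 dl 6 ltac:(lra)).
        assert (0 < dl ^ 10) by (apply pow_lt; lra).
        assert (dl ^ 10 * dl ^ 6 <= dl ^ 10 * 1) by (apply Rmult_le_compat_l; lra). lra. }
      assert (Hcd2 : chi * dl ^ 5 <= 40000) by (unfold KK in HS; lra).
      assert (chi ^ 2 * dl ^ 16 <= 40000 ^ 2).
      { apply Rle_trans with (chi ^ 2 * dl ^ 10). apply Rmult_le_compat_l; [apply pow2_ge_0|lra].
        replace (chi ^ 2 * dl ^ 10) with ((chi * dl ^ 5) ^ 2) by ring. apply pow_incr.
        split; [|lra]. apply Rmult_le_pos; [lra|apply pow_le; lra]. }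
      lra.
Qed.

Theorem corollary1 :
  exists C : R, 0 < C /\
    forall (c : R) (n : nat) (chi : R) (psi : R -> R),
      0 <= c ->
      is_chi c n chi ->
      is_pswf c n chi psi ->
      0 < chi ->
      c ^ 2 / chi < 1 ->
      forall x, -1 <= x <= 1 ->
        Rabs (psi x) <= C / (1 - c ^ 2 / chi) ^ 4 * sqrt (sqrt chi) /\
        sqrt (sqrt (1 - x ^ 2)) * Rabs (psi x) <= C / (1 - c ^ 2 / chi) ^ 4.
Proof.
  exists 10000. split; [lra|].
  intros c n chi psi Hc _ Hps Hchi Hq x Hx.
  destruct Hps as [[dpsi [d2psi Hode]] [Hcont [Hnorm [Hpar _]]]].
  set (dl := 1 - c ^ 2 / chi).
  assert (Hc2 : 0 <= c ^ 2 / chi) by (apply Rdiv_le_0_compat; [apply pow2_ge_0|lra]).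
  assert (Hdl : 0 < dl <= 1) by (unfold dl; lra).
  assert (Hc2e : c ^ 2 = chi * (1 - dl)) by (unfold dl; field; lra).
  assert (H : ODEH (c ^ 2) chi psi dpsi d2psi) by exact Hode.
  set (eps := (-1) ^ n) in *.
  pose proof (eps_cases n) as He. fold eps in He.
  set (y := Rabs x).
  assert (Hy : 0 <= y <= 1) by (unfold y; split; [apply Rabs_pos|apply Rabs_le; lra]).
  destruct (main_bounds (c ^ 2) chi dl psi dpsi d2psi eps H Hchi Hdl Hc2e Hcont Hnorm He Hpar y Hy)
    as [B1 B2].
  assert (Hpx : Rabs (psi x) = Rabs (psi y) /\ pp x = pp y).
  { unfold y. destruct (Rle_lt_dec 0 x).
    - rewrite (Rabs_right x) by lra. auto.
    - rewrite (Rabs_left x) by lra. split.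
      + rewrite Hpar by lra. rewrite Rabs_mult.
        replace (Rabs eps) with 1 by (destruct He as [E|E]; rewrite E; unfold Rabs; destruct Rcase_abs; lra).
        ring_simplify. replace (- - x) with x by ring. reflexivity.
      + unfold pp. ring. }
  destruct Hpx as [Hpx1 Hpx2].
  assert (Hd4 : 0 < dl ^ 4) by (apply pow_lt; lra).
  assert (Hd16 : dl ^ 16 = (dl ^ 4) ^ 4) by ring.
  assert (Ha4 : Rabs (psi x) ^ 4 = psi y ^ 4).
  { rewrite Hpx1. replace (Rabs (psi y) ^ 4) with ((Rabs (psi y) ^ 2) ^ 2) by ring.
    rewrite pow2_abs. ring. }
  split.
  - apply fourth_le. apply Rabs_pos.
    apply Rmult_le_pos. apply Rdiv_le_0_compat; lra. apply sqrt_pos.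
    rewrite Ha4. rewrite Rpow_mult_distr, sqsq4 by lra.
    apply Rmult_le_reg_r with (dl ^ 16). apply pow_lt; lra.
    replace ((10000 / dl ^ 4) ^ 4 * chi * dl ^ 16) with (10000 ^ 4 * chi) by (rewrite Hd16; field; lra).
    exact B1.
  - apply fourth_le. apply Rmult_le_pos; [apply sqrt_pos|apply Rabs_pos].
    apply Rdiv_le_0_compat; lra.
    rewrite Rpow_mult_distr, sqsq4, Ha4. 2: nra.
    replace (1 - x ^ 2) with (pp y) by (rewrite <- Hpx2; reflexivity).
    apply Rmult_le_reg_r with (dl ^ 16). apply pow_lt; lra.
    replace ((10000 / dl ^ 4) ^ 4 * dl ^ 16) with (10000 ^ 4) by (rewrite Hd16; field; lra).
    exact B2.
Qed.
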